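(* The following activation functions $\phi:\mathbb{R}\to\mathbb{R}$ satisfy Property 1, Property 2 and Property 3: the ReLU $\phi(z)=\max\{z,0\}$, the leaky ReLU $\phi(z)=\max\{z,0.01z\}$, the squared ReLU $\phi(z)=\max\{z,0\}^2$, and every non-linear, non-decreasing smooth function with bounded first derivative $\phi'$ that is symmetric (i.e. $\phi'(z)=\phi'(-z)$) and bounded second derivative, e.g. the sigmoid $\phi(z)=1/(1+e^{-z})$, $\tanh$, and $\phi(z)=\int_0^z e^{-t^2}\,dt$. Moreover, the linear function $\phi(z)=z$ does not satisfy Property 2, and the quadratic function $\phi(z)=z^2$ satisfies neither Property 1 nor Property 2.
   Context: Activation functions are continuous; if $\phi$ is not differentiable, $\phi'$ denotes the left derivative. Let $z\sim\mathcal{N}(0,1)$. Property 1: $0\le \phi'(z)\le L_1|z|^p$ for all $z$, for some constants $L_1>0$, $p\ge 0$. Property 2: for $\sigma>0$ let $\alpha_q(\sigma)=\mathbb{E}[\phi'(\sigma z)z^q]$ for $q\in\{0,1,2\}$, $\beta_q(\sigma)=\mathbb{E}[\phi'(\sigma z)^2 z^q]$ for $q\in\{0,2\}$, and $\rho(\sigma)=\min\{\beta_0(\sigma)-\alpha_0(\sigma)^2-\alpha_1(\sigma)^2,\ \beta_2(\sigma)-\alpha_1(\sigma)^2-\alpha_2(\sigma)^2,\ \alpha_0(\sigma)\alpha_2(\sigma)-\alpha_1(\sigma)^2\}$. Property 2 requires $\rho(\sigma)>0$ for all $\sigma>0$. Property 3: either (a) $|\phi''(z)|\le L_2$ for all $z$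 for some constant $L_2$, or (b) $\phi''(z)=0$ except at finitely many ($e$) points. *)

(* Defs.v *)
From Stdlib Require Import Reals Lra List.
Open Scope R_scope.

Definition is_left_deriv (f df : R -> R) : Prop :=
  forall z eps, 0 < eps -> exists delta, 0 < delta /\
    forall h, - delta < h -> h < 0 -> Rabs ((f (z + h) - f z) / h - df z) < eps.

(* real power x^p for x >= 0 and p >= 0, with the convention 0^0 = 1 *)
Definition rpow (x p : R) : R :=
  if Req_EM_T x 0 then (if Req_EM_T p 0 then 1 else 0) else Rpower x p.

Definition has_integral (f : R -> R) (a b l : R) : Prop :=
  exists pr : Riemann_integrable f a b, RiemannInt pr = l.

Definition improper_integral (f : R -> R) (l : R) : Prop :=
  (forall a b, exists pr : Riemann_integrable f a b, True) /\
  forall eps, 0 < eps -> exists M, forall a b, a <= - M -> M <= b ->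
    forall pr : Riemann_integrable f a b, Rabs (RiemannInt pr - l) < eps.

Definition gauss_density (z : R) : R := exp (- (z ^ 2) / 2) / sqrt (2 * PI).

Definition gauss_exp (g : R -> R) (l : R) : Prop :=
  improper_integral (fun z => g z * gauss_density z) l.

Definition Property1 (phi : R -> R) : Prop :=
  exists dphi, is_left_deriv phi dphi /\
  exists L1 p, 0 < L1 /\ 0 <= p /\
    forall z, 0 <= dphi z /\ dphi z <= L1 * rpow (Rabs z) p.

Definition Property2 (phi : R -> R) : Prop :=
  exists dphi, is_left_deriv phi dphi /\
  forall sigma, 0 < sigma ->
    exists a0 a1 a2 b0 b2,
      gauss_exp (fun z => dphi (sigma * z)) a0 /\
      gauss_exp (fun z => dphi (sigma * z) * z) a1 /\
      gauss_exp (fun z => dphi (sigma * z) * z ^ 2) a2 /\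
      gauss_exp (fun z => dphi (sigma * z) ^ 2) b0 /\
      gauss_exp (fun z => dphi (sigma * z) ^ 2 * z ^ 2) b2 /\
      0 < Rmin (b0 - a0 ^ 2 - a1 ^ 2)
               (Rmin (b2 - a1 ^ 2 - a2 ^ 2) (a0 * a2 - a1 ^ 2)).

Definition Property3 (phi : R -> R) : Prop :=
  exists dphi, is_left_deriv phi dphi /\
  ( (exists ddphi L2, is_left_deriv dphi ddphi /\
        forall z, Rabs (ddphi z) <= L2)
    \/ (exists S : list R, forall z, ~ In z S -> derivable_pt_lim dphi z 0) ).

Definition AllProps (phi : R -> R) : Prop :=
  Property1 phi /\ Property2 phi /\ Property3 phi.

(* C^infinity: a sequence of successive derivatives *)
Definition smooth_with (phi : R -> R) (D : nat -> R -> R) : Prop :=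
  D 0%nat = phi /\ forall n z, derivable_pt_lim (D n) z (D (S n) z).

Definition relu (z : R) : R := Rmax z 0.
Definition leaky_relu (z : R) : R := Rmax z (z / 100).
Definition sq_relu (z : R) : R := (Rmax z 0) ^ 2.
Definition sigmoid (z : R) : R := 1 / (1 + exp (- z)).

(* Main.v *)
Require Import Defs.
From Stdlib Require Import Reals List Lra Lia Psatz Classical.
From Coquelicot Require Import Coquelicot.
Open Scope R_scope.

Implicit Types f g h : R -> R.
Definition LI (f : R -> R) := forall a b, ex_RInt f a b.

Lemma RInt_plusR f g a b : ex_RInt f a b -> ex_RInt g a b ->
  RInt (fun x => f x + g x) a b = RInt f a b + RInt g a b.
Proof. intros H1 H2; exact (RInt_plus f g a b H1 H2). Qed.

Lemma RInt_scalR f c a b : ex_RInt f a b ->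
  RInt (fun x => c * f x) a b = c * RInt f a b.
Proof. intros H1; exact (RInt_scal f a b c H1). Qed.

Lemma ex_RInt_plusR f g a b : ex_RInt f a b -> ex_RInt g a b ->
  ex_RInt (fun x => f x + g x) a b.
Proof. intros H1 H2; exact (ex_RInt_plus f g a b H1 H2). Qed.

Lemma ex_RInt_scalR f c a b : ex_RInt f a b -> ex_RInt (fun x => c * f x) a b.
Proof. intros H1; exact (ex_RInt_scal f a b c H1). Qed.

Lemma RInt_swapR f a b : ex_RInt f a b -> RInt f b a = - RInt f a b.
Proof. intros H; rewrite <- opp_RInt_swap; auto. Qed.

Lemma RInt_ChaslesR f a b c : ex_RInt f a b -> ex_RInt f b c ->
  RInt f a b + RInt f b c = RInt f a c.
Proof. intros H1 H2; exact (RInt_Chasles f a b c H1 H2). Qed.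

Lemma LI_plus f g : LI f -> LI g -> LI (fun x => f x + g x).
Proof. intros Hf Hg a b; apply ex_RInt_plusR; auto. Qed.
Lemma LI_scal f c : LI f -> LI (fun x => c * f x).
Proof. intros Hf a b; apply ex_RInt_scalR; auto. Qed.
Lemma LI_ext f g : (forall x, f x = g x) -> LI f -> LI g.
Proof. intros E Hf a b; apply ex_RInt_ext with f; auto. Qed.

Lemma LI_cont f : (forall x, continuity_pt f x) -> LI f.
Proof.
  intros H a b; apply (ex_RInt_continuous (V:=R_CompleteNormedModule)); intros z _.
  apply (proj1 (continuity_pt_filterlim f z)); auto.
Qed.

Definition Imp (f : R -> R) (l : R) : Prop :=
  LI f /\ forall eps, 0 < eps -> exists M, forall a b, a <= - M -> M <= b ->
      Rabs (RInt f a b - l) < eps.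

Lemma Imp_improper f l : Imp f l -> improper_integral f l.
Proof.
  intros [H1 H2]; split.
  - intros a b; exists (ex_RInt_Reals_0 _ _ _ (H1 a b)); auto.
  - intros eps He; destruct (H2 eps He) as [M HM]; exists M.
    intros a b Ha Hb pr; rewrite <- RInt_Reals; auto.
Qed.

Lemma improper_Imp f l : improper_integral f l -> Imp f l.
Proof.
  intros [H1 H2]; split.
  - intros a b; destruct (H1 a b) as [pr _]; apply ex_RInt_Reals_1; auto.
  - intros eps He; destruct (H2 eps He) as [M HM]; exists M.
    intros a b Ha Hb; destruct (H1 a b) as [pr _]; rewrite (RInt_Reals _ _ _ pr); auto.
Qed.

Lemma Imp_unique f l1 l2 : Imp f l1 -> Imp f l2 -> l1 = l2.
Proof.
  intros [_ H1] [_ H2].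
  destruct (Req_dec l1 l2) as [|Hn]; auto.
  set (e := Rabs (l1 - l2) / 2).
  assert (He : 0 < e) by (unfold e; assert (0 < Rabs (l1 - l2)) by (apply Rabs_pos_lt; intro; apply Hn; lra); lra).
  destruct (H1 e He) as [M1 HM1]; destruct (H2 e He) as [M2 HM2].
  set (M := Rmax (Rabs M1) (Rabs M2)).
  assert (A1 : - M <= - M1) by (unfold M; pose proof (Rmax_l (Rabs M1) (Rabs M2)); pose proof (Rle_abs M1); lra).
  assert (A2 : - M <= - M2) by (unfold M; pose proof (Rmax_r (Rabs M1) (Rabs M2)); pose proof (Rle_abs M2); lra).
  specialize (HM1 (-M) M A1 ltac:(lra)); specialize (HM2 (-M) M A2 ltac:(lra)).
  exfalso. assert (Rabs (l1 - l2) <= Rabs (RInt f (-M) M - l2) + Rabs (RInt f (-M) M - l1)).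
  { replace (l1 - l2) with ((RInt f (-M) M - l2) - (RInt f (-M) M - l1)) by ring.
    eapply Rle_trans; [apply Rabs_triang|]. rewrite Rabs_Ropp; lra. }
  unfold e in *; lra.
Qed.

Lemma Imp_ext f g l : (forall x, f x = g x) -> Imp f l -> Imp g l.
Proof.
  intros E [H1 H2]; split.
  - apply LI_ext with f; auto.
  - intros eps He; destruct (H2 eps He) as [M HM]; exists M; intros a b Ha Hb.
    rewrite <- (RInt_ext f g); auto.
Qed.

Definition Pos (f : R -> R) (l : R) : Prop :=
  forall eps, 0 < eps -> exists M, forall b, M <= b -> Rabs (RInt f 0 b - l) < eps.

Lemma Pos_M0 f l : Pos f l -> forall eps, 0 < eps -> exists M, 0 <= M /\
  forall b, M <= b -> Rabs (RInt f 0 b - l) < eps.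
Proof.
  intros H eps He; destruct (H eps He) as [M HM]; exists (Rmax M 0); split.
  apply Rmax_r. intros b Hb; apply HM; pose proof (Rmax_l M 0); lra.
Qed.

Lemma Pos_ext f g l : (forall x, 0 < x -> f x = g x) -> Pos f l -> Pos g l.
Proof.
  intros E H eps He; destruct (Pos_M0 f l H eps He) as [M [HM0 HM]]; exists M.
  intros b Hb; rewrite <- (RInt_ext f g); auto.
  intros x Hx; apply E. rewrite Rmin_left in Hx; lra.
Qed.

Lemma Pos_plus f g l1 l2 : LI f -> LI g -> Pos f l1 -> Pos g l2 ->
  Pos (fun x => f x + g x) (l1 + l2).
Proof.
  intros Lf Lg H1 H2 eps He.
  destruct (H1 (eps/2) ltac:(lra)) as [M1 HM1]; destruct (H2 (eps/2) ltac:(lra)) as [M2 HM2].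
  exists (Rmax M1 M2); intros b Hb.
  rewrite RInt_plusR; auto.
  specialize (HM1 b ltac:(pose proof (Rmax_l M1 M2); lra)).
  specialize (HM2 b ltac:(pose proof (Rmax_r M1 M2); lra)).
  replace (RInt f 0 b + RInt g 0 b - (l1 + l2)) with ((RInt f 0 b - l1) + (RInt g 0 b - l2)) by ring.
  eapply Rle_lt_trans; [apply Rabs_triang|]; lra.
Qed.

Lemma Pos_scal f c l : LI f -> Pos f l -> Pos (fun x => c * f x) (c * l).
Proof.
  intros Lf H eps He.
  destruct (H (eps / (Rabs c + 1))) as [M HM].
  { apply Rdiv_lt_0_compat; auto; pose proof (Rabs_pos c); lra. }
  exists M; intros b Hb; rewrite RInt_scalR; auto.
  replace (c * RInt f 0 b - c * l) with (c * (RInt f 0 b - l)) by ring.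
  rewrite Rabs_mult. specialize (HM b Hb).
  pose proof (Rabs_pos c). pose proof (Rabs_pos (RInt f 0 b - l)).
  apply Rle_lt_trans with ((Rabs c + 1) * Rabs (RInt f 0 b - l)).
  nra. apply Rmult_lt_reg_l with (/ (Rabs c + 1)).
  apply Rinv_0_lt_compat; lra.
  rewrite <- Rmult_assoc, Rinv_l by lra. unfold Rdiv in HM. lra.
Qed.

Lemma Pos_unique f l1 l2 : Pos f l1 -> Pos f l2 -> l1 = l2.
Proof.
  intros H1 H2.
  destruct (Req_dec l1 l2) as [|Hn]; auto.
  set (e := Rabs (l1 - l2) / 2).
  assert (He : 0 < e) by (unfold e; assert (0 < Rabs (l1 - l2)) by (apply Rabs_pos_lt; intro; apply Hn; lra); lra).
  destruct (H1 e He) as [M1 HM1]; destruct (H2 e He) as [M2 HM2].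
  set (M := Rmax M1 M2).
  specialize (HM1 M (Rmax_l _ _)); specialize (HM2 M (Rmax_r _ _)).
  exfalso. assert (Rabs (l1 - l2) <= Rabs (RInt f 0 M - l2) + Rabs (RInt f 0 M - l1)).
  { replace (l1 - l2) with ((RInt f 0 M - l2) - (RInt f 0 M - l1)) by ring.
    eapply Rle_trans; [apply Rabs_triang|]. rewrite Rabs_Ropp; lra. }
  unfold e in *; lra.
Qed.

Lemma RInt_neg f a : ex_RInt f a 0 -> RInt f a 0 = RInt (fun z => f (- z)) 0 (- a).
Proof.
  intros H.
  assert (E := RInt_comp_lin (V:=R_CompleteNormedModule) f (-1) 0 0 (-a)).
  replace (-1 * 0 + 0) with 0 in E by ring.
  replace (-1 * - a + 0) with a in E by ring.
  assert (Hx : ex_RInt f 0 a) by (apply ex_RInt_swap; auto).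
  specialize (E Hx).
  assert (E2 : RInt (fun y => -1 * f (-1 * y + 0)) 0 (-a) = RInt (fun z => -1 * f (- z)) 0 (-a)).
  { apply RInt_ext; intros; f_equal; f_equal; ring. }
  change (RInt (fun y : R => scal (-1) (f (-1 * y + 0))) 0 (- a)) with
     (RInt (fun y : R => -1 * (f (-1 * y + 0))) 0 (- a)) in E.
  rewrite E2 in E.
  assert (Hx2 : ex_RInt (fun z => f (- z)) 0 (-a)).
  { apply ex_RInt_ext with (fun z => -1 * (-1 * f (-1 * z + 0))).
    intros x _. replace (-1 * x + 0) with (-x) by ring. simpl. ring.
    apply ex_RInt_scalR.
    apply (ex_RInt_comp_lin (V:=R_CompleteNormedModule) f (-1) 0 0 (-a)).
    replace (-1 * 0 + 0) with 0 by ring; replace (-1 * - a + 0) with a by ring; auto. }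
  rewrite RInt_scalR in E by auto.
  rewrite (RInt_swapR f 0 a) by auto. lra.
Qed.

Lemma Imp_halves f lp lm : LI f -> Pos f lp -> Pos (fun z => f (- z)) lm -> Imp f (lp + lm).
Proof.
  intros L Hp Hm; split; auto.
  intros eps He.
  destruct (Hp (eps/2) ltac:(lra)) as [M1 HM1]; destruct (Hm (eps/2) ltac:(lra)) as [M2 HM2].
  exists (Rmax M1 M2); intros a b Ha Hb.
  rewrite <- (RInt_ChaslesR f a 0 b) by auto.
  rewrite RInt_neg by auto.
  specialize (HM1 b ltac:(pose proof (Rmax_l M1 M2); lra)).
  specialize (HM2 (-a) ltac:(pose proof (Rmax_r M1 M2); lra)).
  replace (RInt (fun z => f (- z)) 0 (- a) + RInt f 0 b - (lp + lm))
    with ((RInt f 0 b - lp) + (RInt (fun z => f (- z)) 0 (- a) - lm)) by ring.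
  eapply Rle_lt_trans; [apply Rabs_triang|]; lra.
Qed.


Lemma cont_eps f x0 eps : continuity_pt f x0 -> 0 < eps ->
  exists d, 0 < d /\ forall x, Rabs (x - x0) < d -> Rabs (f x - f x0) < eps.
Proof.
  intros H He. unfold continuity_pt, continue_in, limit1_in, limit_in in H.
  destruct (H eps He) as [d [Hd Hx]]. exists d; split; auto.
  intros x Hxd. destruct (Req_dec x x0) as [->|Hn].
  - rewrite Rminus_eq_0, Rabs_R0; auto.
  - apply (Hx x). split. split. exact I. auto. simpl; unfold R_dist; auto.
Qed.

Lemma mono_lim (F : R -> R) K :
  (forall x y, 0 <= x -> x <= y -> F x <= F y) -> (forall x, 0 <= x -> F x <= K) ->
  exists L, forall eps, 0 < eps -> exists M, forall b, M <= b -> Rabs (F b - L) < eps.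
Proof.
  intros Hm Hb.
  set (E := fun y => exists x, 0 <= x /\ y = F x).
  assert (bE : bound E) by (exists K; intros y [x [Hx ->]]; auto).
  assert (nE : exists y, E y) by (exists (F 0); exists 0; split; [lra|auto]).
  destruct (completeness E bE nE) as [m [Hub Hlub]].
  exists m; intros eps He.
  assert (Hex : exists x, 0 <= x /\ m - eps < F x).
  { apply NNPP; intros Hn.
    assert (m <= m - eps); [|lra].
    apply Hlub; intros y [x [Hx ->]].
    apply Rnot_lt_le; intros Hl; apply Hn; exists x; split; auto. }
  destruct Hex as [x0 [Hx0 Hf]].
  exists x0; intros b Hbx.
  assert (F x0 <= F b) by (apply Hm; lra).
  assert (F b <= m) by (apply Hub; exists b; split; [lra|auto]).
  apply Rabs_def1; lra.
Qed.

Lemma limit_upper (F : R -> R) L :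
  (forall x y, 0 <= x -> x <= y -> F x <= F y) ->
  (forall eps, 0 < eps -> exists M, forall b, M <= b -> Rabs (F b - L) < eps) ->
  forall x, 0 <= x -> F x <= L.
Proof.
  intros Hm Hl x Hx. apply Rnot_lt_le; intros Hlt.
  destruct (Hl (F x - L) ltac:(lra)) as [M HM].
  specialize (HM (Rmax M x) (Rmax_l _ _)).
  assert (F x <= F (Rmax M x)) by (apply Hm; auto; apply Rmax_r).
  apply Rabs_def2 in HM; lra.
Qed.

Lemma RInt_mono_pos u : LI u -> (forall x, 0 < x -> 0 <= u x) ->
  forall x y, 0 <= x -> x <= y -> RInt u 0 x <= RInt u 0 y.
Proof.
  intros L Hu x y Hx Hy.
  rewrite <- (RInt_ChaslesR u 0 x y) by auto.
  assert (0 <= RInt u x y); [|lra].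
  apply RInt_ge_0; auto. intros z Hz; apply Hu; lra.
Qed.

Lemma Pos_mono_exists u w Lw : LI u -> LI w -> (forall x, 0 < x -> 0 <= u x <= w x) ->
  Pos w Lw -> exists L, Pos u L.
Proof.
  intros Lu Lw' Huw Hw.
  assert (Wm := RInt_mono_pos w Lw' ltac:(intros x Hx; specialize (Huw x Hx); lra)).
  assert (Um := RInt_mono_pos u Lu ltac:(intros x Hx; specialize (Huw x Hx); lra)).
  destruct (mono_lim (fun b => RInt u 0 b) Lw Um) as [L HL].
  { intros x Hx. apply Rle_trans with (RInt w 0 x).
    apply RInt_le; auto. intros z Hz; apply Huw; lra.
    apply (limit_upper (fun b => RInt w 0 b)); auto. }
  exists L; exact HL.
Qed.

Lemma Pos_bounded_exists f w Lw : LI f -> LI w -> (forall x, 0 < x -> Rabs (f x) <= w x) ->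
  Pos w Lw -> exists L, Pos f L.
Proof.
  intros Lf Lw' Hb Hw.
  destruct (Pos_mono_exists (fun x => f x + w x) (fun x => 2 * w x) (2 * Lw)) as [L HL].
  - apply LI_plus; auto.
  - apply LI_scal; auto.
  - intros x Hx; specialize (Hb x Hx); pose proof (Rle_abs (f x)); pose proof (Rle_abs (- f x)); rewrite Rabs_Ropp in *; lra.
  - apply Pos_scal; auto.
  - exists (L + -1 * Lw).
    apply Pos_ext with (fun x => (f x + w x) + -1 * w x).
    intros; ring.
    apply Pos_plus; auto. apply LI_plus; auto. apply LI_scal; auto.
    apply Pos_scal; auto.
Qed.

Lemma Pos_pos f L z0 : (forall x, continuity_pt f x) -> (forall x, 0 < x -> 0 <= f x) ->
  0 < z0 -> 0 < f z0 -> Pos f L -> 0 < L.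
Proof.
  intros Hc Hp Hz Hf HL.
  assert (Lf := LI_cont f Hc).
  destruct (cont_eps f z0 (f z0 / 2) (Hc z0) ltac:(lra)) as [d0 [Hd0 Hd]].
  set (d := Rmin d0 z0 / 2).
  assert (Hdp : 0 < d) by (unfold d; pose proof (Rmin_pos d0 z0 Hd0 Hz); lra).
  assert (Hdd : d < d0 /\ d < z0) by (unfold d; pose proof (Rmin_l d0 z0); pose proof (Rmin_r d0 z0); pose proof (Rmin_pos d0 z0 Hd0 Hz); lra).
  assert (Key : forall b, z0 + d <= b -> d * f z0 <= RInt f 0 b).
  { intros b Hb.
    rewrite <- (RInt_ChaslesR f 0 (z0 - d) b) by auto.
    rewrite <- (RInt_ChaslesR f (z0 - d) (z0 + d) b) by auto.
    assert (0 <= RInt f 0 (z0 - d)) by (apply RInt_ge_0; [lra|auto|intros; apply Hp; lra]).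
    assert (0 <= RInt f (z0 + d) b) by (apply RInt_ge_0; [lra|auto|intros; apply Hp; lra]).
    assert (RInt (fun _ => f z0 / 2) (z0 - d) (z0 + d) <= RInt f (z0 - d) (z0 + d)).
    { apply RInt_le; auto. lra. apply ex_RInt_const.
      intros x Hx. assert (Rabs (x - z0) < d0) by (apply Rabs_def1; lra).
      specialize (Hd x H1). apply Rabs_def2 in Hd. lra. }
    rewrite RInt_const in H1. simpl in H1. unfold scal in H1; simpl in H1; unfold mult in H1; simpl in H1.
    nra. }
  destruct (HL (d * f z0 / 2) ltac:(nra)) as [M HM].
  specialize (HM (Rmax M (z0 + d)) (Rmax_l _ _)).
  specialize (Key (Rmax M (z0 + d)) (Rmax_r _ _)).
  apply Rabs_def2 in HM. nra.
Qed.


Definition E2 (x : R) := exp (- (x * x)).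
Definition GI (t : R) := RInt E2 0 t.
Definition Uf (u t : R) := exp (- (u * u * (1 + t * t))) / (1 + t * t).
Definition UI (u : R) := RInt (fun t => Uf u t) 0 1.

Lemma cont_exd f x : ex_derive f x -> continuity_pt f x.
Proof.
  intros H. apply (proj2 (continuity_pt_filterlim f x)).
  apply (ex_derive_continuous (K:=R_AbsRing) (V:=R_NormedModule)); auto.
Qed.

Lemma E2_cont x : continuity_pt E2 x.
Proof. apply cont_exd. unfold E2. auto_derive. auto. Qed.

Lemma E2_LI : LI E2.
Proof. apply LI_cont, E2_cont. Qed.

Lemma Uf_cont u t : continuity_pt (fun t => Uf u t) t.
Proof.
  apply cont_exd. unfold Uf. auto_derive. nra.
Qed.

Lemma Uf_ex u a b : ex_RInt (fun t => Uf u t) a b.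
Proof. apply LI_cont; intros; apply Uf_cont. Qed.

Lemma Uf_derive u t : is_derive (fun z => Uf z t) u (-2 * u * exp (- (u * u * (1 + t * t)))).
Proof.
  unfold Uf. auto_derive. auto. field. nra.
Qed.

Lemma cont2_D x t : continuity_2d_pt (fun u v => Derive (fun z => Uf z v) u) x t.
Proof.
  apply continuity_2d_pt_ext with (fun u v => (-2 * u) * exp (- (u * u * (1 + v * v)))).
  { intros u v; symmetry; apply is_derive_unique; apply Uf_derive. }
  apply continuity_2d_pt_mult.
  - apply continuity_2d_pt_mult. apply continuity_2d_pt_const. apply continuity_2d_pt_id1.
  - apply continuity_1d_2d_pt_comp with (f := exp) (g := fun u v => - (u * u * (1 + v * v))).
    apply derivable_continuous_pt, derivable_pt_exp.
    apply continuity_2d_pt_opp. apply continuity_2d_pt_mult.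
    apply continuity_2d_pt_mult; apply continuity_2d_pt_id1.
    apply continuity_2d_pt_plus. apply continuity_2d_pt_const.
    apply continuity_2d_pt_mult; apply continuity_2d_pt_id2.
Qed.

Lemma Uf_D (x t : R) : Derive (fun u => Uf u t) x = -2 * exp (- (x * x)) * (x * E2 (x * t + 0)).
Proof.
  transitivity (-2 * x * exp (- (x * x * (1 + t * t)))).
  apply is_derive_unique, Uf_derive. unfold E2.
  replace (- (x * x * (1 + t * t))) with (- (x * x) + - ((x * t + 0) * (x * t + 0))) by ring.
  rewrite exp_plus. ring.
Qed.

Lemma UI_derive (x : R) : is_derive UI x (-2 * exp (- (x * x)) * GI x).
Proof.
  unfold UI.
  assert (H := is_derive_RInt_param Uf 0 1 x).
  assert (h1 : locally x (fun x0 => forall t : R, Rmin 0 1 <= t <= Rmax 0 1 -> ex_derive (fun u => Uf u t) x0)).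
  { apply filter_forall. intros y t _. eexists; apply Uf_derive. }
  assert (h2 : forall t : R, Rmin 0 1 <= t <= Rmax 0 1 -> continuity_2d_pt (fun u v : R => Derive (fun z : R => Uf z v) u) x t).
  { intros t _; apply cont2_D. }
  assert (h3 : locally x (fun y => ex_RInt (fun t : R => Uf y t) 0 1)).
  { apply filter_forall. intros y; apply Uf_ex. }
  pose proof (H h1 h2 h3) as Hd.
  replace (-2 * exp (- (x * x)) * GI x) with (RInt (fun t : R => Derive (fun u : R => Uf u t) x) 0 1); [exact Hd|].
  rewrite (RInt_ext _ (fun t => (-2 * exp (- (x * x))) * (x * E2 (x * t + 0)))).
  2:{ intros t _. apply Uf_D. }
  rewrite RInt_scalR.
  2:{ apply ex_RInt_ext with (fun t => scal x (E2 (x * t + 0))). reflexivity.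
      apply (ex_RInt_comp_lin (V:=R_CompleteNormedModule)). apply E2_LI. }
  f_equal. unfold GI.
  assert (E := RInt_comp_lin (V:=R_CompleteNormedModule) E2 x 0 0 1 (E2_LI _ _)).
  replace (x * 0 + 0) with 0 in E by ring. replace (x * 1 + 0) with x in E by ring.
  rewrite <- E. reflexivity.
Qed.

Lemma GI_derive (x : R) : is_derive GI x (E2 x).
Proof.
  unfold GI. apply (is_derive_RInt (V:=R_CompleteNormedModule) E2 GI 0 x).
  - apply filter_forall; intros b. apply (RInt_correct (V:=R_CompleteNormedModule)). apply E2_LI.
  - apply (proj1 (continuity_pt_filterlim E2 x)). apply E2_cont.
Qed.

Definition HH t := GI t * GI t + UI t.

Lemma HH_derive (x : R) : is_derive HH x 0.
Proof.
  unfold HH.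
  replace 0 with (E2 x * GI x + GI x * E2 x + (-2 * exp (- (x * x)) * GI x)).
  2:{ unfold E2; ring. }
  apply (is_derive_plus (K:=R_AbsRing) (V:=R_NormedModule)).
  apply (is_derive_mult GI GI). apply GI_derive. apply GI_derive. intros; apply Rmult_comm.
  apply UI_derive.
Qed.

Lemma HH_const t : HH t = HH 0.
Proof.
  destruct (MVT_gen HH 0 t (fun _ => 0)) as [c [_ Hc]].
  - intros; apply HH_derive.
  - intros x _. apply (proj2 (continuity_pt_filterlim HH x)).
    apply (ex_derive_continuous (K:=R_AbsRing) (V:=R_NormedModule)). eexists; apply HH_derive.
  - lra.
Qed.

Lemma HH0 : HH 0 = PI / 4.
Proof.
  unfold HH, GI, UI. rewrite RInt_point. unfold zero; simpl.
  rewrite (RInt_ext _ (fun t => / (1 + t ^ 2))).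
  2:{ intros t _; unfold Uf. replace (- (0 * 0 * (1 + t * t))) with 0 by ring. rewrite exp_0.
      simpl. field. nra. }
  rewrite (is_RInt_unique _ 0 1 (atan 1 - atan 0)).
  rewrite atan_1, atan_0. ring.
  apply (is_RInt_derive (V:=R_CompleteNormedModule) atan).
  - intros x _. apply is_derive_Reals, derivable_pt_lim_atan.
  - intros x _. apply (proj1 (continuity_pt_filterlim _ x)).
    apply cont_exd. auto_derive. nra.
Qed.

Lemma exp_le x y : x <= y -> exp x <= exp y.
Proof. intros [H|H]; [apply Rlt_le, exp_increasing; auto|rewrite H; lra]. Qed.

Lemma UI_bounds t : 0 <= UI t <= exp (- (t * t)).
Proof.
  unfold UI; split.
  - apply RInt_ge_0. lra. apply Uf_ex. intros x _; unfold Uf.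
    apply Rlt_le, Rdiv_lt_0_compat. apply exp_pos. nra.
  - replace (exp (- (t * t))) with (RInt (fun _ => exp (- (t * t))) 0 1).
    2:{ rewrite RInt_const. unfold scal; simpl; unfold mult; simpl; ring. }
    apply RInt_le. lra. apply Uf_ex. apply ex_RInt_const.
    intros x Hx; unfold Uf.
    assert (exp (- (t * t * (1 + x * x))) <= exp (- (t * t))) by (apply exp_le; nra).
    assert (0 < exp (- (t * t * (1 + x * x)))) by apply exp_pos.
    apply Rle_trans with (exp (- (t * t * (1 + x * x)))); auto.
    unfold Rdiv. rewrite <- (Rmult_1_r (exp _)) at 2. apply Rmult_le_compat_l. lra.
    rewrite <- Rinv_1. apply Rinv_le_contravar; nra.
Qed.

Lemma GI_nonneg t : 0 <= t -> 0 <= GI t.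
Proof.
  intros Ht; apply RInt_ge_0; auto. apply E2_LI. intros; unfold E2; apply Rlt_le, exp_pos.
Qed.

Lemma GI_sq t : GI t * GI t = PI / 4 - UI t.
Proof. rewrite <- HH0, <- (HH_const t). unfold HH; ring. Qed.

Lemma exp_small t : 0 < t -> exp (- (t * t)) <= 1 / t.
Proof.
  intros Ht. pose proof (exp_ineq1_le (t * t)).
  assert (exp (- (t * t)) * exp (t * t) = 1) by (rewrite <- exp_plus; replace (- (t * t) + t * t) with 0 by ring; apply exp_0).
  pose proof (exp_pos (- (t * t))). pose proof (exp_pos (t * t)).
  apply Rmult_le_reg_r with t; auto. unfold Rdiv; rewrite Rmult_assoc, Rinv_l by lra. nra.
Qed.

Lemma Pos_E2 : Pos E2 (sqrt PI / 2).
Proof.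
  intros eps He.
  set (s := sqrt PI / 2).
  assert (Hs : 0 < s) by (unfold s; assert (0 < sqrt PI) by (apply sqrt_lt_R0, PI_RGT_0); lra).
  assert (Hss : s * s = PI / 4) by (unfold s; replace (sqrt PI / 2 * (sqrt PI / 2)) with ((sqrt PI * sqrt PI) / 4) by field; rewrite sqrt_sqrt; [lra|apply Rlt_le, PI_RGT_0]).
  exists (Rmax 1 (2 / (s * eps))); intros b Hb.
  assert (Hb1 : 1 <= b) by (pose proof (Rmax_l 1 (2 / (s * eps))); lra).
  assert (Hb2 : 2 / (s * eps) <= b) by (pose proof (Rmax_r 1 (2 / (s * eps))); lra).
  fold (GI b).
  pose proof (GI_nonneg b ltac:(lra)). pose proof (GI_sq b). pose proof (UI_bounds b).
  pose proof (exp_small b ltac:(lra)).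
  assert (Hd : (GI b - s) * (GI b + s) = - UI b) by nra.
  assert (Hu : UI b < s * eps).
  { apply Rle_lt_trans with (1 / b); [lra|].
    apply Rmult_lt_reg_r with b; [lra|]. unfold Rdiv. rewrite Rmult_assoc, Rinv_l, Rmult_1_r by lra.
    assert (2 <= s * eps * b).
    { apply Rmult_le_reg_l with (/ (s * eps)). apply Rinv_0_lt_compat; nra.
      rewrite <- Rmult_assoc, Rinv_l, Rmult_1_l by nra. unfold Rdiv in Hb2; lra. }
    lra. }
  apply Rabs_def1; nra.
Qed.


Notation gd := gauss_density.
Definition cg := sqrt (2 * PI).

Lemma cg_pos : 0 < cg.
Proof. unfold cg; apply sqrt_lt_R0; pose proof PI_RGT_0; lra. Qed.

Lemma gd_eq z : gd z = exp (- (z * z) / 2) / cg.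
Proof. unfold gd, gauss_density, cg. f_equal. f_equal. f_equal. ring. Qed.

Lemma gd_pos z : 0 < gd z.
Proof. rewrite gd_eq. apply Rdiv_lt_0_compat. apply exp_pos. apply cg_pos. Qed.

Lemma gd_even z : gd (- z) = gd z.
Proof. rewrite !gd_eq. f_equal. f_equal. f_equal. ring. Qed.

Lemma gd0 : gd 0 = 1 / cg.
Proof. rewrite gd_eq. replace (- (0 * 0) / 2) with 0 by field. rewrite exp_0. auto. Qed.

Lemma gd_derive (z : R) : is_derive gd z (- z * gd z).
Proof.
  apply (is_derive_ext (fun z => exp (- (z * z) / 2) / cg)).
  intros; rewrite gd_eq; auto.
  rewrite gd_eq. pose proof cg_pos. auto_derive. auto. unfold Rdiv. field. lra.
Qed.

Lemma gd_cont z : continuity_pt gd z.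
Proof. apply cont_exd. eexists; apply gd_derive. Qed.

Lemma LI_gdpoly (p : R -> R) : (forall z, continuity_pt p z) -> LI (fun z => p z * gd z).
Proof. intros H; apply LI_cont; intros z; apply continuity_pt_mult; auto; apply gd_cont. Qed.

Lemma cont_pow k z : continuity_pt (fun z => z ^ k) z.
Proof. apply derivable_continuous_pt, derivable_pt_pow. Qed.

Lemma LI_pow_gd k : LI (fun z => z ^ k * gd z).
Proof. apply LI_gdpoly; intros; apply cont_pow. Qed.

Lemma Pos_scale F L k : LI F -> Pos F L -> 0 < k -> Pos (fun z => k * F (k * z)) L.
Proof.
  intros LF H Hk eps He. destruct (Pos_M0 F L H eps He) as [M [HM0 HM]].
  exists (M / k); intros b Hb.
  assert (E := RInt_comp_lin (V:=R_CompleteNormedModule) F k 0 0 b (LF _ _)).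
  replace (k * 0 + 0) with 0 in E by ring. replace (k * b + 0) with (k * b) in E by ring.
  assert (E' : RInt (fun z => k * F (k * z)) 0 b = RInt F 0 (k * b)).
  { etransitivity; [|exact E]. apply RInt_ext. intros x _.
    replace (k * x + 0) with (k * x) by ring. reflexivity. }
  rewrite E'. apply HM.
  apply Rmult_le_reg_l with (/ k). apply Rinv_0_lt_compat; auto.
  rewrite <- Rmult_assoc, Rinv_l, Rmult_1_l by lra. unfold Rdiv in Hb; lra.
Qed.

Lemma Pos_gd : Pos gd (1 / 2).
Proof.
  set (r := sqrt 2).
  assert (Hr : 0 < r) by (unfold r; apply sqrt_lt_R0; lra).
  assert (Hrr : r * r = 2) by (unfold r; apply sqrt_sqrt; lra).
  assert (H1 := Pos_scale E2 (sqrt PI / 2) (1 / r) E2_LI Pos_E2 ltac:(apply Rdiv_lt_0_compat; lra)).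
  assert (L1 : LI (fun z => 1 / r * E2 (1 / r * z))).
  { intros a b. apply ex_RInt_ext with (fun z => scal (1/r) (E2 (1/r * z + 0))).
    intros x _; replace (1 / r * x + 0) with (1/r*x) by ring; reflexivity.
    apply (ex_RInt_comp_lin (V:=R_CompleteNormedModule) E2 (1/r) 0 a b (E2_LI _ _)). }
  assert (H2 := Pos_scal (fun z => 1 / r * E2 (1 / r * z)) (r / cg) _ L1 H1).
  assert (Hc : r / cg * (sqrt PI / 2) = 1 / 2).
  { unfold cg. rewrite sqrt_mult by (pose proof PI_RGT_0; lra). fold r.
    assert (0 < sqrt PI) by (apply sqrt_lt_R0, PI_RGT_0). field. lra. }
  rewrite Hc in H2.
  apply Pos_ext with (2 := H2).
  intros x _. rewrite gd_eq. unfold E2. pose proof cg_pos.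
  replace (- (1 / r * x * (1 / r * x))) with (- (x * x) / 2).
  field. split; lra.
  field_simplify. replace (r ^ 2) with 2 by (rewrite <- Hrr; ring). reflexivity. lra.
Qed.

Lemma exp_quart y : 0 <= y -> y * y / 16 <= exp (y / 2).
Proof.
  intros Hy. pose proof (exp_ineq1_le (y / 4)).
  assert (exp (y / 2) = exp (y / 4) * exp (y / 4)) by (rewrite <- exp_plus; f_equal; field).
  rewrite H0. nra.
Qed.

Lemma tail_bound b k : 1 <= b -> (k <= 3)%nat -> 0 <= b ^ k * gd b <= 16 / (cg * b).
Proof.
  intros Hb Hk. pose proof (gd_pos b). pose proof cg_pos.
  assert (Hbk : b ^ k <= b ^ 3).
  { apply Rle_pow; auto. }
  assert (0 <= b ^ k) by (apply pow_le; lra).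
  split. nra.
  rewrite gd_eq.
  pose proof (exp_quart (b * b) ltac:(nra)).
  assert (E : exp (- (b * b) / 2) * exp (b * b / 2) = 1).
  { rewrite <- exp_plus. replace (- (b * b) / 2 + b * b / 2) with 0 by field. apply exp_0. }
  pose proof (exp_pos (- (b * b) / 2)).
  assert (exp (- (b * b) / 2) <= 16 / (b * b * (b * b))).
  { apply Rmult_le_reg_r with (b * b * (b * b)). nra. replace (16 / (b * b * (b * b)) * (b * b * (b * b))) with 16 by (field; nra). nra. }
  assert (b ^ 3 = b * b * b) by ring.
  assert (0 < exp (- (b * b) / 2) / cg) by (apply Rdiv_lt_0_compat; auto).
  apply Rle_trans with (b ^ 3 * (exp (- (b * b) / 2) / cg)); [apply Rmult_le_compat_r; lra|].
  rewrite H5. unfold Rdiv in *.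
  apply Rle_trans with (b * b * b * (16 * / (b * b * (b * b))) * / cg).
  rewrite <- Rmult_assoc. apply Rmult_le_compat_r. apply Rlt_le, Rinv_0_lt_compat; auto.
  apply Rmult_le_compat_l; nra.
  right. field. split; lra.
Qed.

Lemma Pos_of_rem f L (r : R -> R) K : (forall b, 1 <= b -> @eq R (RInt f 0 b) (L + r b)) ->
  (forall b, 1 <= b -> Rabs (r b) <= K / b) -> Pos f L.
Proof.
  intros H1 H2 eps He. exists (Rmax 1 (2 * (Rabs K + 1) / eps)); intros b Hb.
  assert (Hb1 : 1 <= b) by (pose proof (Rmax_l 1 (2 * (Rabs K + 1) / eps)); lra).
  assert (Hb2 : 2 * (Rabs K + 1) / eps <= b) by (pose proof (Rmax_r 1 (2 * (Rabs K + 1) / eps)); lra).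
  rewrite H1 by auto. replace (L + r b - L) with (r b) by ring.
  apply Rle_lt_trans with (K / b); auto.
  apply Rle_lt_trans with ((Rabs K + 1) / b).
  unfold Rdiv; apply Rmult_le_compat_r. apply Rlt_le, Rinv_0_lt_compat; lra.
  pose proof (Rle_abs K); lra.
  apply Rmult_lt_reg_r with b. lra. unfold Rdiv. rewrite Rmult_assoc, Rinv_l by lra.
  assert (2 * (Rabs K + 1) <= b * eps).
  { assert (2 * (Rabs K + 1) = (2 * (Rabs K + 1) / eps) * eps) by (field; lra). nra. }
  pose proof (Rabs_pos K). nra.
Qed.

Lemma RInt_antider (F f : R -> R) b : (forall z, is_derive F z (f z)) -> (forall z, continuity_pt f z) ->
  @eq R (RInt f 0 b) (F b - F 0).
Proof.
  intros H1 H2. apply is_RInt_unique.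
  apply (is_RInt_derive (V:=R_CompleteNormedModule) F f).
  intros; apply H1. intros x _; apply (proj1 (continuity_pt_filterlim f x)); auto.
Qed.

Lemma cont_gdp (p : R -> R) : (forall z, continuity_pt p z) -> forall z, continuity_pt (fun z => p z * gd z) z.
Proof. intros H z; apply continuity_pt_mult; auto; apply gd_cont. Qed.

Lemma ngd_derive (z : R) : is_derive (fun z => - gd z) z (z * gd z).
Proof.
  assert (E : z * gd z = - (- z * gd z)) by ring. rewrite E.
  apply (is_derive_opp (K:=R_AbsRing) gd). apply gd_derive.
Qed.

Lemma Pos_m1 : Pos (fun z => z * gd z) (1 / cg).
Proof.
  apply Pos_of_rem with (r := fun b => - gd b) (K := 16 / cg).
  - intros b _. rewrite (RInt_antider (fun z => - gd z)).
    + rewrite gd0; ring.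
    + intros z. apply ngd_derive.
    + apply cont_gdp; intros; apply derivable_continuous_pt, derivable_pt_id.
  - intros b Hb. rewrite Rabs_Ropp. pose proof (tail_bound b 0 Hb ltac:(lia)). simpl in H.
    rewrite Rabs_right by lra. replace (16 / cg / b) with (16 / (cg * b)); [lra|]. pose proof cg_pos. field; lra.
Qed.

Lemma is_derive_val (F : R -> R) (x l l' : R) : is_derive F x l -> @eq R l l' -> is_derive F x l'.
Proof. intros H E; rewrite <- E; auto. Qed.

Lemma polygd_derive (p : R -> R) (dp : R -> R) (z : R) : is_derive p z (dp z) ->
  is_derive (fun z => p z * gd z) z (dp z * gd z - z * p z * gd z).
Proof.
  intros H. eapply is_derive_val.
  apply (is_derive_mult p gd z (dp z) (- z * gd z)); auto. apply gd_derive.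
  intros; apply Rmult_comm.
  simpl. unfold plus, mult; simpl. ring.
Qed.

Lemma Pos_m2 : Pos (fun z => z ^ 2 * gd z) (1 / 2).
Proof.
  assert (Hh : Pos (fun z => z ^ 2 * gd z + -1 * gd z) 0).
  { apply Pos_of_rem with (r := fun b => - (b ^ 1 * gd b)) (K := 16 / cg).
    - intros b _. rewrite (RInt_antider (fun z => - z * gd z)).
      + rewrite gd0; simpl; ring.
      + intros z. eapply is_derive_val. apply (polygd_derive (fun z => - z) (fun _ => -1)).
        apply (is_derive_opp (K:=R_AbsRing) (fun z => z)). apply (is_derive_id (K:=R_AbsRing)).
        simpl; ring.
      + intros z. apply continuity_pt_plus. apply cont_gdp; intros; apply cont_pow.
        apply continuity_pt_scal. apply gd_cont.
    - intros b Hb. rewrite Rabs_Ropp. pose proof (tail_bound b 1 Hb ltac:(lia)).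
      rewrite Rabs_right by lra. replace (16 / cg / b) with (16 / (cg * b)); [lra|]. pose proof cg_pos. field; lra. }
  assert (H := Pos_plus _ _ _ _ (LI_cont gd gd_cont) (LI_plus _ _ (LI_pow_gd 2) (LI_scal _ (-1) (LI_cont gd gd_cont))) Pos_gd Hh).
  replace (1 / 2 + 0) with (1 / 2) in H by ring.
  apply Pos_ext with (2 := H). intros; ring.
Qed.

Lemma Pos_m3 : Pos (fun z => z ^ 3 * gd z) (2 / cg).
Proof.
  apply Pos_of_rem with (r := fun b => - (b ^ 2 * gd b) - 2 * (b ^ 0 * gd b)) (K := 48 / cg).
  - intros b _. rewrite (RInt_antider (fun z => - (z * z + 2) * gd z)).
    + rewrite gd0; simpl; field. apply Rgt_not_eq, cg_pos.
    + intros z. eapply is_derive_val. apply (polygd_derive (fun z => - (z * z + 2)) (fun z => - (2 * z))).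
      auto_derive. auto. ring. simpl; ring.
    + apply cont_gdp; intros; apply cont_pow.
  - intros b Hb. pose proof (tail_bound b 2 Hb ltac:(lia)). pose proof (tail_bound b 0 Hb ltac:(lia)).
    pose proof cg_pos.
    replace (48 / cg / b) with (3 * (16 / (cg * b))) by (field; lra).
    apply Rabs_le. lra.
Qed.

Lemma Pos_m4 : Pos (fun z => z ^ 4 * gd z) (3 / 2).
Proof.
  assert (Hh : Pos (fun z => z ^ 4 * gd z + -3 * (z ^ 2 * gd z)) 0).
  { apply Pos_of_rem with (r := fun b => - (b ^ 3 * gd b)) (K := 16 / cg).
    - intros b _. rewrite (RInt_antider (fun z => - (z * z * z) * gd z)).
      + simpl; ring.
      + intros z. eapply is_derive_val. apply (polygd_derive (fun z => - (z * z * z)) (fun z => - (3 * z * z))).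
        auto_derive. auto. ring. simpl; ring.
      + intros z. apply continuity_pt_plus. apply cont_gdp; intros; apply cont_pow.
        apply continuity_pt_scal. apply cont_gdp; intros; apply cont_pow.
    - intros b Hb. rewrite Rabs_Ropp. pose proof (tail_bound b 3 Hb ltac:(lia)).
      rewrite Rabs_right by lra. replace (16 / cg / b) with (16 / (cg * b)); [lra|]. pose proof cg_pos. field; lra. }
  assert (H := Pos_plus _ _ _ _ (LI_scal _ 3 (LI_pow_gd 2)) (LI_plus _ _ (LI_pow_gd 4) (LI_scal _ (-3) (LI_pow_gd 2))) (Pos_scal _ 3 _ (LI_pow_gd 2) Pos_m2) Hh).
  replace (3 * (1 / 2) + 0) with (3 / 2) in H by field.
  apply Pos_ext with (2 := H). intros; ring.
Qed.

Lemma Pos_m0' : Pos (fun z => z ^ 0 * gd z) (1 / 2).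
Proof. apply Pos_ext with (2 := Pos_gd). intros; simpl; ring. Qed.

Lemma Pos_m1' : Pos (fun z => z ^ 1 * gd z) (1 / cg).
Proof. apply Pos_ext with (2 := Pos_m1). intros; simpl; ring. Qed.

Lemma Imp_even_odd f lp s : LI f -> (forall z, f (- z) = s * f z) -> Pos f lp -> Imp f (lp + s * lp).
Proof.
  intros L E H. apply Imp_halves; auto.
  apply Pos_ext with (fun z => s * f z). intros; rewrite E; auto.
  apply Pos_scal; auto.
Qed.

Lemma Imp_m0 : Imp (fun z => z ^ 0 * gd z) 1.
Proof.
  replace 1 with (1/2 + 1 * (1/2)) by field.
  apply Imp_even_odd. apply LI_pow_gd. intros; rewrite gd_even; simpl; ring. apply Pos_m0'.
Qed.

Lemma Imp_m1 : Imp (fun z => z ^ 1 * gd z) 0.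
Proof.
  replace 0 with (1 / cg + -1 * (1 / cg)) by ring.
  apply Imp_even_odd. apply LI_pow_gd. intros; rewrite gd_even; simpl; ring. apply Pos_m1'.
Qed.

Lemma Imp_m2 : Imp (fun z => z ^ 2 * gd z) 1.
Proof.
  replace 1 with (1/2 + 1 * (1/2)) by field.
  apply Imp_even_odd. apply LI_pow_gd. intros; rewrite gd_even; simpl; ring. apply Pos_m2.
Qed.

Lemma Imp_m3 : Imp (fun z => z ^ 3 * gd z) 0.
Proof.
  replace 0 with (2 / cg + -1 * (2 / cg)) by ring.
  apply Imp_even_odd. apply LI_pow_gd. intros; rewrite gd_even; simpl; ring. apply Pos_m3.
Qed.


Lemma PI_lt_4 : PI < 4.
Proof. pose proof (PI_ineq 1). simpl in H. unfold tg_alt, PI_tg in H. simpl in H. lra. Qed.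

Lemma PI_gt_3 : 3 < PI.
Proof. pose proof PI2_3_2. lra. Qed.

Lemma cg2 : cg * cg = 2 * PI.
Proof. unfold cg; apply sqrt_sqrt. pose proof PI_RGT_0; lra. Qed.

Lemma left_deriv_unique f d z l : is_left_deriv f d -> derivable_pt_lim f z l -> d z = l.
Proof.
  intros H1 H2. apply NNPP; intros Hn.
  set (e := Rabs (d z - l) / 2).
  assert (He : 0 < e) by (unfold e; assert (0 < Rabs (d z - l)) by (apply Rabs_pos_lt; intro; apply Hn; lra); lra).
  destruct (H1 z e He) as [d1 [Hd1 Hq1]].
  destruct (H2 e He) as [d2 Hq2].
  set (hh := - Rmin d1 d2 / 2).
  assert (Hm : 0 < Rmin d1 d2) by (apply Rmin_pos; auto; apply cond_pos).
  assert (Hh1 : - d1 < hh) by (unfold hh; pose proof (Rmin_l d1 d2); lra).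
  assert (Hh0 : hh < 0) by (unfold hh; lra).
  assert (Hh2 : Rabs hh < d2) by (unfold hh; rewrite Rabs_left by lra; pose proof (Rmin_r d1 d2); lra).
  specialize (Hq1 hh Hh1 Hh0). specialize (Hq2 hh ltac:(lra) Hh2).
  assert (Rabs (d z - l) <= Rabs ((f (z + hh) - f z) / hh - d z) + Rabs ((f (z + hh) - f z) / hh - l)).
  { replace (d z - l) with (- ((f (z + hh) - f z) / hh - d z) + ((f (z + hh) - f z) / hh - l)) by ring.
    eapply Rle_trans; [apply Rabs_triang|]. rewrite Rabs_Ropp; lra. }
  unfold e in *; lra.
Qed.

Lemma left_deriv_of_deriv f d : (forall z, derivable_pt_lim f z (d z)) -> is_left_deriv f d.
Proof.
  intros H z eps He. destruct (H z eps He) as [dl Hd]. exists dl; split. apply cond_pos.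
  intros h H1 H2. apply Hd. lra. rewrite Rabs_left by lra. lra.
Qed.

Lemma deriv_loc_const F z : (exists d, 0 < d /\ forall y, Rabs (y - z) < d -> F y = F z) ->
  derivable_pt_lim F z 0.
Proof.
  intros [d [Hd H]] eps He. exists (mkposreal d Hd). intros h Hh Hhd; simpl in Hhd.
  rewrite H. replace ((F z - F z) / h - 0) with 0 by (field; auto). rewrite Rabs_R0; lra.
  replace (z + h - z) with h by ring. auto.
Qed.

Lemma rpow_0 x : rpow x 0 = 1.
Proof.
  unfold rpow. destruct (Req_EM_T x 0). destruct (Req_EM_T 0 0); auto; lra.
  unfold Rpower. rewrite Rmult_0_l; apply exp_0.
Qed.

Lemma rpow_1 x : 0 <= x -> rpow x 1 = x.
Proof.
  intros Hx. unfold rpow. destruct (Req_EM_T x 0). destruct (Req_EM_T 1 0); auto; lra.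
  apply Rpower_1. lra.
Qed.

Lemma gauss_exp_Imp h l : Imp (fun z => h z * gd z) l -> gauss_exp h l.
Proof. intros H. unfold gauss_exp. apply Imp_improper; auto. Qed.

Definition mk (k : nat) : R :=
  match k with 0 => 1/2 | 1 => 1 / cg | 2 => 1/2 | 3 => 2 / cg | _ => 3/2 end.

Lemma Pos_mk k : (k <= 4)%nat -> Pos (fun z => z ^ k * gd z) (mk k).
Proof.
  intros Hk. destruct k as [|[|[|[|[|k]]]]]; simpl mk.
  apply Pos_m0'. apply Pos_m1'. apply Pos_m2. apply Pos_m3. apply Pos_m4. lia.
Qed.

Lemma LI_piece f P Q : (forall z, continuity_pt P z) -> (forall z, continuity_pt Q z) ->
  (forall z, 0 < z -> f z = P z) -> (forall z, z < 0 -> f z = Q z) -> LI f.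
Proof.
  intros HP HQ E1 E2.
  assert (H0 : forall b, ex_RInt f 0 b).
  { intros b. destruct (Rlt_le_dec 0 b).
    - apply ex_RInt_ext with P. intros x Hx. rewrite Rmin_left in Hx by lra. symmetry; apply E1; lra.
      apply LI_cont; auto.
    - apply ex_RInt_ext with Q. intros x Hx. rewrite Rmax_left in Hx by lra. symmetry; apply E2; lra.
      apply LI_cont; auto. }
  intros a b. apply ex_RInt_Chasles with 0; auto. apply ex_RInt_swap; auto.
Qed.

Lemma gauss_exp_piece (h : R -> R) (k : nat) (u v : R) : (k <= 4)%nat ->
  (forall z, 0 < z -> h z = u * z ^ k) -> (forall z, 0 < z -> h (- z) = v * z ^ k) ->
  gauss_exp h (u * mk k + v * mk k).
Proof.
  intros Hk E1 E2. apply gauss_exp_Imp.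
  assert (L : LI (fun z => h z * gd z)).
  { apply LI_piece with (fun z => u * (z ^ k * gd z)) (fun z => v * ((- z) ^ k * gd z)).
    - intros z; apply continuity_pt_scal, cont_gdp; intros; apply cont_pow.
    - intros z; apply continuity_pt_scal, cont_gdp; intros.
      apply cont_exd. auto_derive. auto.
    - intros z Hz; rewrite E1; auto; ring.
    - intros z Hz. assert (E := E2 (-z) ltac:(lra)). replace (- - z) with z in E by ring.
      rewrite E. ring. }
  apply Imp_halves; auto.
  - apply Pos_ext with (fun z => u * (z ^ k * gd z)). intros z Hz; rewrite E1; auto; ring.
    apply Pos_scal. apply LI_pow_gd. apply Pos_mk; auto.
  - apply Pos_ext with (fun z => v * (z ^ k * gd z)). intros z Hz; rewrite E2, gd_even; auto; ring.
    apply Pos_scal. apply LI_pow_gd. apply Pos_mk; auto.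
Qed.


Definition dl (c z : R) : R := if Rlt_dec 0 z then 1 else c.

Lemma dl_pos c z : 0 < z -> dl c z = 1.
Proof. intros H; unfold dl; destruct (Rlt_dec 0 z); auto; lra. Qed.
Lemma dl_npos c z : z <= 0 -> dl c z = c.
Proof. intros H; unfold dl; destruct (Rlt_dec 0 z); auto; lra. Qed.

Lemma relu_left : is_left_deriv relu (dl 0).
Proof.
  intros z eps He. unfold relu. destruct (Rlt_le_dec 0 z).
  - exists z; split; auto. intros h H1 H2. rewrite dl_pos by auto.
    rewrite !Rmax_left by lra. replace ((z + h - z) / h - 1) with 0 by (field; lra).
    rewrite Rabs_R0; auto.
  - exists 1; split; [lra|]. intros h H1 H2. rewrite dl_npos by auto.
    rewrite !Rmax_right by lra. replace ((0 - 0) / h - 0) with 0 by (field; lra).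
    rewrite Rabs_R0; auto.
Qed.

Lemma leaky_left : is_left_deriv leaky_relu (dl (1/100)).
Proof.
  intros z eps He. unfold leaky_relu. destruct (Rlt_le_dec 0 z).
  - exists z; split; auto. intros h H1 H2. rewrite dl_pos by auto.
    rewrite !Rmax_left by lra. replace ((z + h - z) / h - 1) with 0 by (field; lra).
    rewrite Rabs_R0; auto.
  - exists 1; split; [lra|]. intros h H1 H2. rewrite dl_npos by auto.
    rewrite !Rmax_right by lra. replace (((z + h) / 100 - z / 100) / h - 1 / 100) with 0 by (field; lra).
    rewrite Rabs_R0; auto.
Qed.

Lemma dl_P1 c : 0 <= c <= 1 -> exists L1 p, 0 < L1 /\ 0 <= p /\
    forall z, 0 <= dl c z /\ dl c z <= L1 * rpow (Rabs z) p.
Proof.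
  intros Hc. exists 1, 0. split; [lra|split; [lra|]]. intros z. rewrite rpow_0.
  unfold dl; destruct (Rlt_dec 0 z); lra.
Qed.

Lemma dl_P3 c : (exists S : list R, forall z, ~ In z S -> derivable_pt_lim (dl c) z 0).
Proof.
  exists (0 :: nil). intros z Hz. apply deriv_loc_const.
  assert (z <> 0) by (intro; apply Hz; left; auto).
  exists (Rabs z); split. apply Rabs_pos_lt; auto.
  intros y Hy. destruct (Rlt_le_dec 0 z).
  - rewrite (Rabs_right z) in Hy by lra. apply Rabs_def2 in Hy. rewrite (dl_pos c y), (dl_pos c z); lra.
  - rewrite (Rabs_left z) in Hy by lra. apply Rabs_def2 in Hy. rewrite (dl_npos c y), (dl_npos c z); lra.
Qed.

Lemma tq : 1 / 8 < 1 / cg * (1 / cg) < 1 / 6.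
Proof.
  pose proof cg_pos. pose proof cg2. pose proof PI_lt_4. pose proof PI_gt_3.
  replace (1 / cg * (1 / cg)) with (/ (2 * PI)) by (rewrite <- cg2; field; lra).
  split.
  - apply Rmult_lt_reg_r with (2 * PI). lra. rewrite Rinv_l by lra. lra.
  - apply Rmult_lt_reg_r with (2 * PI). lra. rewrite Rinv_l by lra. lra.
Qed.

Lemma dl_P2 c : 0 <= c < 1 -> forall sigma, 0 < sigma ->
    exists a0 a1 a2 b0 b2,
      gauss_exp (fun z => dl c (sigma * z)) a0 /\
      gauss_exp (fun z => dl c (sigma * z) * z) a1 /\
      gauss_exp (fun z => dl c (sigma * z) * z ^ 2) a2 /\
      gauss_exp (fun z => dl c (sigma * z) ^ 2) b0 /\
      gauss_exp (fun z => dl c (sigma * z) ^ 2 * z ^ 2) b2 /\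
      0 < Rmin (b0 - a0 ^ 2 - a1 ^ 2)
               (Rmin (b2 - a1 ^ 2 - a2 ^ 2) (a0 * a2 - a1 ^ 2)).
Proof.
  intros Hc s Hs.
  assert (P : forall z, 0 < z -> dl c (s * z) = 1) by (intros; apply dl_pos; nra).
  assert (N : forall z, 0 < z -> dl c (s * - z) = c) by (intros; apply dl_npos; nra).
  do 5 eexists. split; [|split; [|split; [|split; [|split]]]].
  - apply (gauss_exp_piece _ 0 1 c). lia. intros; rewrite P; auto; ring. intros; rewrite N; auto; ring.
  - apply (gauss_exp_piece _ 1 1 (- c)). lia. intros; rewrite P; auto; ring. intros; rewrite N; auto; ring.
  - apply (gauss_exp_piece _ 2 1 c). lia. intros; rewrite P; auto; ring. intros; rewrite N; auto; ring.
  - apply (gauss_exp_piece _ 0 1 (c ^ 2)). lia. intros; rewrite P; auto; ring. intros; rewrite N; auto; ring.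
  - apply (gauss_exp_piece _ 2 1 (c ^ 2)). lia. intros; rewrite P; auto; ring. intros; rewrite N; auto; ring.
  - simpl mk. pose proof tq. set (t := 1 / cg) in *.
    assert (K : 0 < (1 - c) ^ 2 * (1 / 4 - t * t)).
    { apply Rmult_lt_0_compat. apply pow_lt; lra. lra. }
    apply Rmin_glb_lt; [|apply Rmin_glb_lt].
    + replace (1 * (1 / 2) + c ^ 2 * (1 / 2) - (1 * (1 / 2) + c * (1 / 2)) ^ 2 - (1 * t + - c * t) ^ 2)
        with ((1 - c) ^ 2 * (1 / 4 - t * t)) by field. auto.
    + replace (1 * (1 / 2) + c ^ 2 * (1 / 2) - (1 * t + - c * t) ^ 2 - (1 * (1 / 2) + c * (1 / 2)) ^ 2)
        with ((1 - c) ^ 2 * (1 / 4 - t * t)) by field. auto.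
    + replace ((1 * (1 / 2) + c * (1 / 2)) * (1 * (1 / 2) + c * (1 / 2)) - (1 * t + - c * t) ^ 2)
        with ((1 - c) ^ 2 * (1 / 4 - t * t) + c) by field. lra.
Qed.

Definition dq (z : R) : R := 2 * Rmax z 0.

Lemma sq_left : is_left_deriv sq_relu dq.
Proof.
  intros z eps He. unfold sq_relu, dq. destruct (Rlt_le_dec 0 z).
  - exists (Rmin z eps); split. apply Rmin_pos; auto. intros h H1 H2.
    pose proof (Rmin_l z eps). pose proof (Rmin_r z eps).
    rewrite !Rmax_left by lra. replace (((z + h) ^ 2 - z ^ 2) / h - 2 * z) with h by (field; lra).
    rewrite Rabs_left by lra. lra.
  - exists 1; split; [lra|]. intros h H1 H2.
    rewrite !Rmax_right by lra. replace ((0 ^ 2 - 0 ^ 2) / h - 2 * 0) with 0 by (field; lra).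
    rewrite Rabs_R0; auto.
Qed.

Lemma dq_left : is_left_deriv dq (fun z => 2 * dl 0 z).
Proof.
  intros z eps He. destruct (relu_left z (eps / 2) ltac:(lra)) as [d [Hd H]].
  exists d; split; auto. intros h H1 H2. specialize (H h H1 H2). unfold dq. unfold relu in H.
  replace ((2 * Rmax (z + h) 0 - 2 * Rmax z 0) / h - 2 * dl 0 z) with
    (2 * ((Rmax (z + h) 0 - Rmax z 0) / h - dl 0 z)) by (field; lra).
  rewrite Rabs_mult, Rabs_right by lra. lra.
Qed.

Lemma sq_P1 : Property1 sq_relu.
Proof.
  exists dq; split. apply sq_left. exists 2, 1. split; [lra|split;[lra|]].
  intros z. rewrite rpow_1 by apply Rabs_pos. unfold dq. split.
  pose proof (Rmax_r z 0); lra.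
  destruct (Rle_dec 0 z). rewrite Rmax_left, Rabs_right; lra. rewrite Rmax_right; [|lra].
  pose proof (Rabs_pos z); lra.
Qed.

Lemma sq_P3 : Property3 sq_relu.
Proof.
  exists dq; split. apply sq_left. left. exists (fun z => 2 * dl 0 z), 2. split. apply dq_left.
  intros z; unfold dl; destruct (Rlt_dec 0 z); rewrite Rabs_right; lra.
Qed.

Lemma sq_P2 : Property2 sq_relu.
Proof.
  exists dq; split. apply sq_left. intros s Hs.
  assert (P : forall z, 0 < z -> dq (s * z) = 2 * s * z) by (intros; unfold dq; rewrite Rmax_left; nra).
  assert (N : forall z, 0 < z -> dq (s * - z) = 0) by (intros; unfold dq; rewrite Rmax_right; nra).
  do 5 eexists. split; [|split; [|split; [|split; [|split]]]].
  - apply (gauss_exp_piece _ 1 (2 * s) 0). lia. intros; rewrite P; auto; ring. intros; rewrite N; auto; ring.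
  - apply (gauss_exp_piece _ 2 (2 * s) 0). lia. intros; rewrite P; auto; ring. intros; rewrite N; auto; ring.
  - apply (gauss_exp_piece _ 3 (2 * s) 0). lia. intros; rewrite P; auto; ring. intros; rewrite N; auto; ring.
  - apply (gauss_exp_piece _ 2 (4 * s ^ 2) 0). lia. intros; rewrite P; auto; ring. intros; rewrite N; auto; ring.
  - apply (gauss_exp_piece _ 4 (4 * s ^ 2) 0). lia. intros; rewrite P; auto; ring. intros; rewrite N; auto; ring.
  - simpl mk. pose proof tq. set (t := 1 / cg) in *.
    replace (2 / cg) with (2 * t) by (unfold t; field; apply Rgt_not_eq, cg_pos).
    assert (0 < s * s) by nra.
    apply Rmin_glb_lt; [|apply Rmin_glb_lt]; nra.
Qed.

Lemma relu_all : AllProps relu.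
Proof.
  split; [|split].
  - exists (dl 0); split. apply relu_left. apply dl_P1; lra.
  - exists (dl 0); split. apply relu_left. apply dl_P2; lra.
  - exists (dl 0); split. apply relu_left. right. apply dl_P3.
Qed.

Lemma leaky_all : AllProps leaky_relu.
Proof.
  split; [|split].
  - exists (dl (1/100)); split. apply leaky_left. apply dl_P1; lra.
  - exists (dl (1/100)); split. apply leaky_left. apply dl_P2; lra.
  - exists (dl (1/100)); split. apply leaky_left. right. apply dl_P3.
Qed.

Lemma sq_all : AllProps sq_relu.
Proof. split; [apply sq_P1|split; [apply sq_P2|apply sq_P3]]. Qed.


Lemma Pos_lin3 f1 f2 f3 l1 l2 l3 a b c : LI f1 -> LI f2 -> LI f3 ->
  Pos f1 l1 -> Pos f2 l2 -> Pos f3 l3 ->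
  Pos (fun z => a * f1 z + b * f2 z + c * f3 z) (a * l1 + b * l2 + c * l3).
Proof.
  intros L1 L2 L3 H1 H2 H3.
  apply Pos_plus. apply LI_plus; apply LI_scal; auto. apply LI_scal; auto.
  apply Pos_plus; try (apply LI_scal; auto); apply Pos_scal; auto.
  apply Pos_scal; auto.
Qed.

Section Core.
Variable H : R -> R.
Variable B : R.
Hypothesis Hc : forall z, continuity_pt H z.
Hypothesis He : forall z, H (- z) = H z.
Hypothesis Hb : forall z, 0 <= H z <= B.
Hypothesis Hn : exists z1 z2, 0 < z1 /\ 0 < z2 /\ H z1 <> H z2.

Let F (k : nat) z := H z * (z ^ k * gd z).
Let Sq (k : nat) z := H z ^ 2 * (z ^ k * gd z).

Lemma sq_pos x : x <> 0 -> 0 < x ^ 2.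
Proof. intros Hx. simpl; rewrite Rmult_1_r. apply Rsqr_pos_lt; auto. Qed.

Lemma F_cont k z : continuity_pt (F k) z.
Proof. unfold F. apply continuity_pt_mult; auto. apply cont_gdp; intros; apply cont_pow. Qed.
Lemma Sq_cont k z : continuity_pt (Sq k) z.
Proof. unfold Sq. apply continuity_pt_mult. apply continuity_pt_mult; auto. apply continuity_pt_mult; auto.
  apply continuity_pt_const; intros ? ?; auto. apply cont_gdp; intros; apply cont_pow. Qed.

Lemma F_ex k : (k <= 4)%nat -> exists L, Pos (F k) L.
Proof.
  intros Hk. apply (Pos_bounded_exists _ (fun z => B * (z ^ k * gd z)) (B * mk k)).
  apply LI_cont, F_cont. apply LI_scal, LI_pow_gd.
  intros x Hx. unfold F. pose proof (Hb x). pose proof (gd_pos x). assert (0 < x ^ k) by (apply pow_lt; auto).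
  rewrite Rabs_right. apply Rmult_le_compat_r; nra. apply Rle_ge; apply Rmult_le_pos; nra.
  apply Pos_scal. apply LI_pow_gd. apply Pos_mk; auto.
Qed.

Lemma Sq_ex k : (k <= 4)%nat -> exists L, Pos (Sq k) L.
Proof.
  intros Hk. apply (Pos_bounded_exists _ (fun z => (B * B) * (z ^ k * gd z)) ((B * B) * mk k)).
  apply LI_cont, Sq_cont. apply LI_scal, LI_pow_gd.
  intros x Hx. unfold Sq. pose proof (Hb x). pose proof (gd_pos x). assert (0 < x ^ k) by (apply pow_lt; auto).
  assert (0 <= H x ^ 2 <= B * B) by (simpl; nra).
  rewrite Rabs_right. apply Rmult_le_compat_r; nra. apply Rle_ge; apply Rmult_le_pos; nra.
  apply Pos_scal. apply LI_pow_gd. apply Pos_mk; auto.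
Qed.

Lemma F_neg k z : F k (- z) = (-1) ^ k * F k z.
Proof. unfold F. rewrite He, gd_even. replace (- z) with (-1 * z) by ring. rewrite Rpow_mult_distr. ring. Qed.
Lemma Sq_neg k z : Sq k (- z) = (-1) ^ k * Sq k z.
Proof. unfold Sq. rewrite He, gd_even. replace (- z) with (-1 * z) by ring. rewrite Rpow_mult_distr. ring. Qed.

Lemma pos_point : exists z, 0 < z /\ 0 < H z.
Proof.
  destruct Hn as [z1 [z2 [H1 [H2 H3]]]].
  destruct (Req_dec (H z1) 0).
  - exists z2; split; auto. pose proof (Hb z2). destruct (Req_dec (H z2) 0); [exfalso; apply H3; lra| lra].
  - exists z1; split; auto. pose proof (Hb z1). lra.
Qed.

Lemma diff_point c : exists z, 0 < z /\ H z <> c.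
Proof.
  destruct Hn as [z1 [z2 [H1 [H2 H3]]]].
  destruct (Req_dec (H z1) c).
  - exists z2; split; auto. intro; apply H3; lra.
  - exists z1; split; auto.
Qed.

Lemma core_P2 :
    exists a0 a1 a2 b0 b2,
      gauss_exp (fun z => H z) a0 /\
      gauss_exp (fun z => H z * z) a1 /\
      gauss_exp (fun z => H z * z ^ 2) a2 /\
      gauss_exp (fun z => H z ^ 2) b0 /\
      gauss_exp (fun z => H z ^ 2 * z ^ 2) b2 /\
      0 < Rmin (b0 - a0 ^ 2 - a1 ^ 2)
               (Rmin (b2 - a1 ^ 2 - a2 ^ 2) (a0 * a2 - a1 ^ 2)).
Proof.
  destruct (F_ex 0 ltac:(lia)) as [P0 HP0].
  destruct (F_ex 1 ltac:(lia)) as [P1 HP1].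
  destruct (F_ex 2 ltac:(lia)) as [P2 HP2].
  destruct (Sq_ex 0 ltac:(lia)) as [Q0 HQ0].
  destruct (Sq_ex 2 ltac:(lia)) as [Q2 HQ2].
  assert (LF : forall k, LI (F k)) by (intros; apply LI_cont, F_cont).
  assert (LS : forall k, LI (Sq k)) by (intros; apply LI_cont, Sq_cont).
  exists (P0 + 1 * P0), (P1 + -1 * P1), (P2 + 1 * P2), (Q0 + 1 * Q0), (Q2 + 1 * Q2).
  split; [|split; [|split; [|split; [|split]]]].
  - apply gauss_exp_Imp. apply Imp_ext with (F 0%nat). intros; unfold F; simpl; ring.
    apply Imp_even_odd; auto. intros; rewrite F_neg; simpl; ring.
  - apply gauss_exp_Imp. apply Imp_ext with (F 1%nat). intros; unfold F; simpl; ring.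
    apply Imp_even_odd; auto. intros; rewrite F_neg; simpl; ring.
  - apply gauss_exp_Imp. apply Imp_ext with (F 2%nat). intros; unfold F; simpl; ring.
    apply Imp_even_odd; auto. intros; rewrite F_neg; simpl; ring.
  - apply gauss_exp_Imp. apply Imp_ext with (Sq 0%nat). intros; unfold Sq; simpl; ring.
    apply Imp_even_odd; auto. intros; rewrite Sq_neg; simpl; ring.
  - apply gauss_exp_Imp. apply Imp_ext with (Sq 2%nat). intros; unfold Sq; simpl; ring.
    apply Imp_even_odd; auto. intros; rewrite Sq_neg; simpl; ring.
  -
    assert (K0 : 0 < Q0 - 2 * P0 * P0).
    { assert (Hp := Pos_lin3 (Sq 0%nat) (F 0%nat) (fun z => z ^ 0 * gd z) Q0 P0 (mk 0%nat) 1 (-4 * P0) (4 * P0 * P0)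
                (LS 0%nat) (LF 0%nat) (LI_pow_gd 0%nat) HQ0 HP0 (Pos_mk 0%nat ltac:(lia))).
      simpl mk in Hp.
      replace (Q0 - 2 * P0 * P0) with (1 * Q0 + -4 * P0 * P0 + 4 * P0 * P0 * (1 / 2)) by field.
      destruct (diff_point (2 * P0)) as [z [Hz Hz2]].
      eapply (Pos_pos _ _ z); [| | exact Hz | | exact Hp].
      - intros x. apply continuity_pt_plus. apply continuity_pt_plus.
        apply continuity_pt_scal, Sq_cont. apply continuity_pt_scal, F_cont.
        apply continuity_pt_scal, cont_gdp; intros; apply cont_pow.
      - intros x Hx. unfold Sq, F. pose proof (gd_pos x).
        replace (1 * (H x ^ 2 * (x ^ 0 * gd x)) + -4 * P0 * (H x * (x ^ 0 * gd x)) + 4 * P0 * P0 * (x ^ 0 * gd x))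
          with ((H x - 2 * P0) ^ 2 * gd x) by (simpl; ring).
        apply Rmult_le_pos; [apply pow2_ge_0|lra].
      - unfold Sq, F. pose proof (gd_pos z).
        replace (1 * (H z ^ 2 * (z ^ 0 * gd z)) + -4 * P0 * (H z * (z ^ 0 * gd z)) + 4 * P0 * P0 * (z ^ 0 * gd z))
          with ((H z - 2 * P0) ^ 2 * gd z) by (simpl; ring).
        apply Rmult_lt_0_compat; auto. apply sq_pos; lra. }
    assert (K2 : 0 < Q2 - 2 * P2 * P2).
    { assert (Hp := Pos_lin3 (Sq 2%nat) (F 2%nat) (fun z => z ^ 2 * gd z) Q2 P2 (mk 2%nat) 1 (-4 * P2) (4 * P2 * P2)
                (LS 2%nat) (LF 2%nat) (LI_pow_gd 2%nat) HQ2 HP2 (Pos_mk 2%nat ltac:(lia))).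
      simpl mk in Hp.
      replace (Q2 - 2 * P2 * P2) with (1 * Q2 + -4 * P2 * P2 + 4 * P2 * P2 * (1 / 2)) by field.
      destruct (diff_point (2 * P2)) as [z [Hz Hz2]].
      eapply (Pos_pos _ _ z); [| | exact Hz | | exact Hp].
      - intros x. apply continuity_pt_plus. apply continuity_pt_plus.
        apply continuity_pt_scal, Sq_cont. apply continuity_pt_scal, F_cont.
        apply continuity_pt_scal, cont_gdp; intros; apply cont_pow.
      - intros x Hx. unfold Sq, F. pose proof (gd_pos x).
        replace (1 * (H x ^ 2 * (x ^ 2 * gd x)) + -4 * P2 * (H x * (x ^ 2 * gd x)) + 4 * P2 * P2 * (x ^ 2 * gd x))
          with ((H x - 2 * P2) ^ 2 * (x ^ 2 * gd x)) by (simpl; ring).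
        apply Rmult_le_pos; [apply pow2_ge_0|]. apply Rmult_le_pos; [apply pow2_ge_0|lra].
      - unfold Sq, F. pose proof (gd_pos z).
        replace (1 * (H z ^ 2 * (z ^ 2 * gd z)) + -4 * P2 * (H z * (z ^ 2 * gd z)) + 4 * P2 * P2 * (z ^ 2 * gd z))
          with ((H z - 2 * P2) ^ 2 * (z ^ 2 * gd z)) by (simpl; ring).
        apply Rmult_lt_0_compat; auto. apply sq_pos; lra. apply Rmult_lt_0_compat; auto. apply sq_pos; lra. }
    destruct pos_point as [z [Hz HHz]].
    assert (K3 : 0 < P0).
    { eapply (Pos_pos _ _ z); [| | exact Hz | | exact HP0].
      apply F_cont. intros x Hx; unfold F; pose proof (gd_pos x); pose proof (Hb x); simpl; nra.
      unfold F; pose proof (gd_pos z); simpl; nra. }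
    assert (K4 : 0 < P2).
    { eapply (Pos_pos _ _ z); [| | exact Hz | | exact HP2].
      apply F_cont. intros x Hx; unfold F; pose proof (gd_pos x); pose proof (Hb x).
      apply Rmult_le_pos. lra. apply Rmult_le_pos. apply pow2_ge_0. lra.
      unfold F; pose proof (gd_pos z). apply Rmult_lt_0_compat; auto. apply Rmult_lt_0_compat; auto. apply sq_pos; lra. }
    apply Rmin_glb_lt; [|apply Rmin_glb_lt].
    + replace (Q0 + 1 * Q0 - (P0 + 1 * P0) ^ 2 - (P1 + -1 * P1) ^ 2) with (2 * (Q0 - 2 * P0 * P0)) by ring. lra.
    + replace (Q2 + 1 * Q2 - (P1 + -1 * P1) ^ 2 - (P2 + 1 * P2) ^ 2) with (2 * (Q2 - 2 * P2 * P2)) by ring. lra.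
    + replace ((P0 + 1 * P0) * (P2 + 1 * P2) - (P1 + -1 * P1) ^ 2) with (4 * (P0 * P2)) by ring.
      apply Rmult_lt_0_compat. lra. apply Rmult_lt_0_compat; auto.
Qed.
End Core.


Lemma nonconst_pos (d : R -> R) : (forall z, continuity_pt d z) -> (forall z, d z = d (- z)) ->
  (exists x y, d x <> d y) -> exists u v, 0 < u /\ 0 < v /\ d u <> d v.
Proof.
  intros Hc He [x [y Hxy]].
  assert (Ea : forall w, d (Rabs w) = d w).
  { intros w. destruct (Rle_dec 0 w). rewrite Rabs_right; lra. rewrite Rabs_left by lra. symmetry; apply He. }
  assert (Key : forall b, 0 < b -> d 0 <> d b -> exists u v, 0 < u /\ 0 < v /\ d u <> d v).
  { intros b Hb Hn. set (e := Rabs (d 0 - d b) / 2).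
    assert (Hep : 0 < e) by (unfold e; assert (0 < Rabs (d 0 - d b)) by (apply Rabs_pos_lt; intro; apply Hn; lra); lra).
    destruct (cont_eps d 0 e (Hc 0) Hep) as [dl [Hdl Hd]].
    exists (dl / 2), b. split; [lra|split; [auto|]].
    intros Heq. specialize (Hd (dl / 2) ltac:(rewrite Rminus_0_r, Rabs_right; lra)).
    rewrite Heq in Hd. unfold e in Hd. rewrite <- Rabs_Ropp in Hd.
    replace (- (d b - d 0)) with (d 0 - d b) in Hd by ring.
    assert (0 < Rabs (d 0 - d b)) by (apply Rabs_pos_lt; intro; apply Hn; lra). lra. }
  destruct (Req_dec (Rabs x) 0) as [Hx0|Hx0]; destruct (Req_dec (Rabs y) 0) as [Hy0|Hy0].
  - exfalso; apply Hxy. rewrite <- (Ea x), <- (Ea y), Hx0, Hy0; auto.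
  - apply (Key (Rabs y)). pose proof (Rabs_pos y); lra. rewrite Ea, <- Hx0, Ea; auto.
  - apply (Key (Rabs x)). pose proof (Rabs_pos x); lra. rewrite Ea, <- Hy0, Ea; auto.
  - exists (Rabs x), (Rabs y). pose proof (Rabs_pos x); pose proof (Rabs_pos y).
    split; [lra|split;[lra|]]. rewrite !Ea; auto.
Qed.

Lemma deriv_cont f d z : derivable_pt_lim f z d -> continuity_pt f z.
Proof. intros H. apply derivable_continuous_pt. exists d; auto. Qed.

Lemma gen_smooth phi d1 d2 :
  (forall z, derivable_pt_lim phi z (d1 z)) -> (forall z, derivable_pt_lim d1 z (d2 z)) ->
  (forall z, 0 <= d1 z) -> (exists B, forall z, Rabs (d1 z) <= B) -> (forall z, d1 z = d1 (- z)) ->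
  (exists B, forall z, Rabs (d2 z) <= B) -> (exists x y, d1 x <> d1 y) -> AllProps phi.
Proof.
  intros H1 H2 Hp [B1 HB1] He [B2 HB2] Hn.
  assert (L1 := left_deriv_of_deriv _ _ H1).
  split; [|split].
  - exists d1; split; auto. exists (Rabs B1 + 1), 0. split. pose proof (Rabs_pos B1); lra. split. lra.
    intros z; rewrite rpow_0. split; auto. pose proof (HB1 z). pose proof (Rle_abs (d1 z)). pose proof (Rle_abs B1). lra.
  - exists d1; split; auto. intros s Hs.
    assert (C1 : forall z, continuity_pt d1 z) by (intros z; apply deriv_cont with (d2 z); auto).
    destruct (nonconst_pos d1 C1 He Hn) as [u [v [Hu [Hv Huv]]]].
    apply (core_P2 (fun z => d1 (s * z)) B1).
    + intros z. apply (continuity_pt_comp (fun z => s * z) d1). 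
      apply continuity_pt_scal, continuity_pt_id. apply C1.
    + intros z. rewrite He. f_equal; ring.
    + intros z; split; auto. pose proof (HB1 (s * z)). pose proof (Rle_abs (d1 (s * z))). lra.
    + exists (u / s), (v / s). split. apply Rdiv_lt_0_compat; auto. split. apply Rdiv_lt_0_compat; auto.
      replace (s * (u / s)) with u by (field; lra). replace (s * (v / s)) with v by (field; lra). auto.
  - exists d1; split; auto. left. exists d2, B2. split; auto. apply left_deriv_of_deriv; auto.
Qed.

Lemma mono_deriv_nonneg f z l : (forall x y, x <= y -> f x <= f y) -> derivable_pt_lim f z l -> 0 <= l.
Proof.
  intros Hm Hd. apply Rnot_lt_le; intros Hl.
  destruct (Hd (- l / 2) ltac:(lra)) as [dl Hdl].
  pose proof (cond_pos dl) as Hdp.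
  specialize (Hdl (dl / 2) ltac:(lra) ltac:(rewrite Rabs_right; lra)).
  assert (f z <= f (z + dl / 2)) by (apply Hm; lra).
  assert (0 <= (f (z + dl / 2) - f z) / (dl / 2)) by (apply Rdiv_le_0_compat; lra).
  apply Rabs_def2 in Hdl. lra.
Qed.

Lemma smooth_case (phi : R -> R) (D : nat -> R -> R) :
     smooth_with phi D ->
     (~ exists a b, forall z, phi z = a * z + b) ->
     (forall x y, x <= y -> phi x <= phi y) ->
     (exists B, forall z, Rabs (D 1%nat z) <= B) ->
     (forall z, D 1%nat z = D 1%nat (- z)) ->
     (exists B, forall z, Rabs (D 2%nat z) <= B) ->
     AllProps phi.
Proof.
  intros [HD0 HDs] Hnl Hm HB1 He HB2.
  assert (H1 : forall z, derivable_pt_lim phi z (D 1%nat z)) by (intros z; rewrite <- HD0; apply HDs).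
  apply (gen_smooth phi (D 1%nat) (D 2%nat)); auto.
  - intros z; apply (mono_deriv_nonneg phi z); auto.
  - apply NNPP; intros Hc. apply Hnl. exists (D 1%nat 0), (phi 0). intros z.
    destruct (MVT_gen phi 0 z (D 1%nat)) as [c [_ Hc2]].
    + intros x _; apply is_derive_Reals; auto.
    + intros x _; apply deriv_cont with (D 1%nat x); auto.
    + assert (D 1%nat c = D 1%nat 0).
      { apply NNPP; intros Hn; apply Hc; exists c, 0; auto. }
      rewrite H in Hc2. lra.
Qed.


Lemma sig_bounds z : 0 < sigmoid z < 1.
Proof.
  unfold sigmoid. pose proof (exp_pos (- z)). split.
  apply Rdiv_lt_0_compat; lra.
  apply Rmult_lt_reg_r with (1 + exp (- z)). lra. unfold Rdiv. rewrite Rmult_assoc, Rinv_l; lra.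
Qed.

Definition sd1 z := sigmoid z * (1 - sigmoid z).
Definition sd2 z := sd1 z * (1 - 2 * sigmoid z).

Lemma sig_der (z : R) : derivable_pt_lim sigmoid z (sd1 z).
Proof.
  apply is_derive_Reals. unfold sd1, sigmoid. pose proof (exp_pos (- z)).
  auto_derive. lra. field. lra.
Qed.

Lemma sd1_der (z : R) : derivable_pt_lim sd1 z (sd2 z).
Proof.
  apply is_derive_Reals. unfold sd2, sd1, sigmoid. pose proof (exp_pos (- z)).
  auto_derive. lra. field. lra.
Qed.

Lemma sig_neg z : sigmoid (- z) = 1 - sigmoid z.
Proof.
  unfold sigmoid. rewrite Ropp_involutive. rewrite exp_Ropp. pose proof (exp_pos z). field. lra.
Qed.

Lemma sig0 : sigmoid 0 = 1 / 2.
Proof. unfold sigmoid; rewrite Ropp_0, exp_0; lra. Qed.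

Lemma sig1_ne : sigmoid 1 <> 1 / 2.
Proof.
  unfold sigmoid. intros Hs.
  assert (exp (Ropp 1) < 1) by (pose proof (exp_increasing (Ropp 1) 0 ltac:(lra)) as Hq; rewrite exp_0 in Hq; exact Hq).
  pose proof (exp_pos (Ropp 1)).
  assert (1 = 1 / 2 * (1 + exp (Ropp 1))).
  { rewrite <- Hs. field. lra. }
  lra.
Qed.

Lemma sigmoid_all : AllProps sigmoid.
Proof.
  apply (gen_smooth sigmoid sd1 sd2).
  - apply sig_der.
  - apply sd1_der.
  - intros z; unfold sd1; pose proof (sig_bounds z); nra.
  - exists 1; intros z; unfold sd1; pose proof (sig_bounds z). rewrite Rabs_right; nra.
  - intros z; unfold sd1; rewrite sig_neg; ring.
  - exists 1; intros z; unfold sd2, sd1; pose proof (sig_bounds z).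
    apply Rabs_le; split; nra.
  - exists 0, 1. unfold sd1. intros Heq. rewrite sig0 in Heq.
    apply sig1_ne. assert ((sigmoid 1 - 1 / 2) ^ 2 = 0) by (simpl; nra).
    assert (sigmoid 1 - 1 / 2 = 0) by (apply Rsqr_0_uniq; unfold Rsqr; simpl in H; lra). lra.
Qed.

Definition td1 z := 1 - tanh z * tanh z.
Definition td2 z := -2 * tanh z * td1 z.

Lemma tanh_eq z : tanh z = (exp z - exp (- z)) / (exp z + exp (- z)).
Proof. unfold tanh, sinh, cosh. pose proof (exp_pos z); pose proof (exp_pos (- z)). field. lra. Qed.

Lemma tanh_bounds z : -1 < tanh z < 1.
Proof.
  rewrite tanh_eq. pose proof (exp_pos z); pose proof (exp_pos (- z)).
  split.
  - apply Rmult_lt_reg_r with (exp z + exp (- z)). lra. unfold Rdiv; rewrite Rmult_assoc, Rinv_l; lra.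
  - apply Rmult_lt_reg_r with (exp z + exp (- z)). lra. unfold Rdiv; rewrite Rmult_assoc, Rinv_l; lra.
Qed.

Lemma tanh_der (z : R) : derivable_pt_lim tanh z (td1 z).
Proof.
  apply is_derive_Reals. apply (is_derive_ext (fun z => (exp z - exp (- z)) / (exp z + exp (- z)))).
  intros; rewrite tanh_eq; auto.
  unfold td1. rewrite tanh_eq. pose proof (exp_pos z); pose proof (exp_pos (- z)).
  auto_derive. lra. unfold Rdiv. field. lra.
Qed.

Lemma td1_der (z : R) : derivable_pt_lim td1 z (td2 z).
Proof.
  apply is_derive_Reals. apply (is_derive_ext (fun z => 1 - ((exp z - exp (- z)) / (exp z + exp (- z))) * ((exp z - exp (- z)) / (exp z + exp (- z))))).
  intros; unfold td1; rewrite tanh_eq; auto.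
  unfold td2, td1. rewrite tanh_eq. pose proof (exp_pos z); pose proof (exp_pos (- z)).
  auto_derive. lra. unfold Rdiv. field. lra.
Qed.

Lemma tanh_neg z : tanh (- z) = - tanh z.
Proof. rewrite !tanh_eq. rewrite Ropp_involutive. pose proof (exp_pos z); pose proof (exp_pos (- z)). field. lra. Qed.

Lemma tanh_all : AllProps tanh.
Proof.
  apply (gen_smooth tanh td1 td2).
  - apply tanh_der.
  - apply td1_der.
  - intros z; unfold td1; pose proof (tanh_bounds z); nra.
  - exists 1; intros z; unfold td1; pose proof (tanh_bounds z). rewrite Rabs_right; nra.
  - intros z; unfold td1; rewrite tanh_neg; ring.
  - exists 2; intros z; unfold td2, td1; pose proof (tanh_bounds z).
    assert (A1 : 0 <= (1 + tanh z) * (1 - tanh z * tanh z)) by (apply Rmult_le_pos; nra).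
    assert (A2 : 0 <= (1 - tanh z) * (1 - tanh z * tanh z)) by (apply Rmult_le_pos; nra).
    apply Rabs_le; split; nra.
  - exists 0, 1. unfold td1. intros Heq.
    assert (tanh 0 = 0) by (rewrite tanh_eq, Ropp_0, exp_0; field).
    assert (tanh 1 <> 0).
    { rewrite tanh_eq. pose proof (exp_pos 1); pose proof (exp_pos (Ropp 1)).
      assert (exp (Ropp 1) < exp 1) by (apply exp_increasing; lra).
      intro Hz. unfold Rdiv in Hz. apply Rmult_integral in Hz. destruct Hz. lra.
      pose proof (Rinv_neq_0_compat (exp 1 + exp (Ropp 1)) ltac:(lra)). lra. }
    rewrite H in Heq. apply H0. nra.
Qed.


Definition ef (z : R) := exp (- (z ^ 2)).
Definition ed2 (z : R) := -2 * z * exp (- (z ^ 2)).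

Lemma ef_cont z : continuity_pt ef z.
Proof. apply cont_exd. unfold ef. auto_derive. auto. Qed.

Lemma ef_der (z : R) : derivable_pt_lim ef z (ed2 z).
Proof. apply is_derive_Reals. unfold ef, ed2. auto_derive. auto. replace (z * (z * 1)) with (z ^ 2) by ring. ring. Qed.

Lemma erf_all phi : (forall z, has_integral (fun t => exp (- (t ^ 2))) 0 z (phi z)) -> AllProps phi.
Proof.
  intros Hp.
  assert (HI : forall b, is_RInt ef 0 b (phi b)).
  { intros b. destruct (Hp b) as [pr Hpr].
    assert (E : RInt ef 0 b = phi b) by (rewrite <- Hpr; apply RInt_Reals).
    rewrite <- E. apply (RInt_correct (V:=R_CompleteNormedModule)). apply ex_RInt_Reals_1; auto. }
  apply (gen_smooth phi ef ed2).
  - intros z. apply is_derive_Reals. apply (is_derive_RInt (V:=R_CompleteNormedModule) ef phi 0 z).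
    apply filter_forall; intros; apply HI.
    apply (proj1 (continuity_pt_filterlim ef z)). apply ef_cont.
  - apply ef_der.
  - intros z; unfold ef; apply Rlt_le, exp_pos.
  - exists 1; intros z; unfold ef. rewrite Rabs_right by (apply Rle_ge, Rlt_le, exp_pos).
    assert (- (z ^ 2) <= 0) by (pose proof (pow2_ge_0 z); lra).
    rewrite <- exp_0. apply exp_le; auto.
  - intros z; unfold ef; f_equal; ring.
  - exists 1; intros z; unfold ed2.
    pose proof (exp_ineq1_le (z ^ 2)).
    assert (E : exp (- (z ^ 2)) * exp (z ^ 2) = 1) by (rewrite <- exp_plus; replace (- (z ^ 2) + z ^ 2) with 0 by ring; apply exp_0).
    pose proof (exp_pos (- (z ^ 2))). pose proof (exp_pos (z ^ 2)).
    assert (A : 2 * Rabs z <= 1 + z ^ 2) by (pose proof (pow2_ge_0 (Rabs z - 1)); rewrite <- (pow2_abs z); nra).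
    rewrite Rabs_mult, Rabs_mult, (Rabs_right (exp _)) by lra.
    replace (Rabs (-2)) with 2 by (rewrite Rabs_left; lra).
    pose proof (Rabs_pos z). nra.
  - exists 0, 1. unfold ef. intros Heq.
    assert (exp (- (1 ^ 2)) < 1).
    { pose proof (exp_increasing (- (1 ^ 2)) 0 ltac:(simpl; lra)) as Hq; rewrite exp_0 in Hq; exact Hq. }
    replace (- (0 ^ 2)) with 0 in Heq by (simpl; ring). rewrite exp_0 in Heq. lra.
Qed.

Lemma Imp_scal f c l : Imp f l -> Imp (fun z => c * f z) (c * l).
Proof.
  intros [L H]; split. apply LI_scal; auto.
  intros eps He.
  destruct (H (eps / (Rabs c + 1))) as [M HM].
  { apply Rdiv_lt_0_compat; auto; pose proof (Rabs_pos c); lra. }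
  exists M; intros a b Ha Hb; rewrite RInt_scalR; auto.
  replace (c * RInt f a b - c * l) with (c * (RInt f a b - l)) by ring.
  rewrite Rabs_mult. specialize (HM a b Ha Hb).
  pose proof (Rabs_pos c). pose proof (Rabs_pos (RInt f a b - l)).
  apply Rle_lt_trans with ((Rabs c + 1) * Rabs (RInt f a b - l)).
  nra. apply Rmult_lt_reg_l with (/ (Rabs c + 1)).
  apply Rinv_0_lt_compat; lra.
  rewrite <- Rmult_assoc, Rinv_l by lra. unfold Rdiv in HM. lra.
Qed.

Lemma not_P2_id : ~ Property2 (fun z => z).
Proof.
  intros [dphi [Hl H2]].
  assert (Hd : forall z, dphi z = 1).
  { intros z. apply (left_deriv_unique (fun z => z) dphi z 1 Hl). exact (derivable_pt_lim_id z). }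
  destruct (H2 1 ltac:(lra)) as [a0 [a1 [a2 [b0 [b2 [G0 [G1 [G2 [G3 [G4 Hr]]]]]]]]]].
  unfold gauss_exp in *. apply improper_Imp in G0, G1, G3.
  assert (A0 : a0 = 1).
  { apply (Imp_unique _ _ _ G0). apply Imp_ext with (2 := Imp_m0). intros; rewrite Hd; simpl; ring. }
  assert (B0 : b0 = 1).
  { apply (Imp_unique _ _ _ G3). apply Imp_ext with (2 := Imp_m0). intros; rewrite Hd; simpl; ring. }
  assert (A1 : a1 = 0).
  { apply (Imp_unique _ _ _ G1). apply Imp_ext with (2 := Imp_m1). intros; rewrite Hd; simpl; ring. }
  pose proof (Rmin_l (b0 - a0 ^ 2 - a1 ^ 2) (Rmin (b2 - a1 ^ 2 - a2 ^ 2) (a0 * a2 - a1 ^ 2))).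
  rewrite A0, B0, A1 in *. simpl in *. lra.
Qed.

Lemma sq_der (z : R) : derivable_pt_lim (fun z => z ^ 2) z (2 * z).
Proof. apply is_derive_Reals. auto_derive. auto. ring. Qed.

Lemma not_P1_sq : ~ Property1 (fun z => z ^ 2).
Proof.
  intros [dphi [Hl [L1 [p [_ [_ Hb]]]]]].
  assert (Hd : dphi (-1) = 2 * -1) by (apply (left_deriv_unique (fun z => z ^ 2) dphi (-1) (2 * -1) Hl); apply sq_der).
  destruct (Hb (-1)) as [Hb1 _]. lra.
Qed.

Lemma not_P2_sq : ~ Property2 (fun z => z ^ 2).
Proof.
  intros [dphi [Hl H2]].
  assert (Hd : forall z, dphi z = 2 * z).
  { intros z. apply (left_deriv_unique (fun z => z ^ 2) dphi z (2 * z) Hl). apply sq_der. }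
  destruct (H2 1 ltac:(lra)) as [a0 [a1 [a2 [b0 [b2 [G0 [G1 [G2 [G3 [G4 Hr]]]]]]]]]].
  unfold gauss_exp in *. apply improper_Imp in G0, G1, G2.
  assert (A0 : a0 = 2 * 0).
  { apply (Imp_unique _ _ _ G0). apply Imp_ext with (2 := Imp_scal _ 2 _ Imp_m1). intros; rewrite Hd; simpl; ring. }
  assert (A1 : a1 = 2 * 1).
  { apply (Imp_unique _ _ _ G1). apply Imp_ext with (2 := Imp_scal _ 2 _ Imp_m2). intros; rewrite Hd; simpl; ring. }
  assert (A2 : a2 = 2 * 0).
  { apply (Imp_unique _ _ _ G2). apply Imp_ext with (2 := Imp_scal _ 2 _ Imp_m3). intros; rewrite Hd; simpl; ring. }
  pose proof (Rmin_r (b0 - a0 ^ 2 - a1 ^ 2) (Rmin (b2 - a1 ^ 2 - a2 ^ 2) (a0 * a2 - a1 ^ 2))).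
  pose proof (Rmin_r (b2 - a1 ^ 2 - a2 ^ 2) (a0 * a2 - a1 ^ 2)).
  rewrite A0, A1, A2 in *. simpl in *. lra.
Qed.

Theorem mainTheorem1 :
  AllProps relu /\
  AllProps leaky_relu /\
  AllProps sq_relu /\
  (forall (phi : R -> R) (D : nat -> R -> R),
     smooth_with phi D ->
     (~ exists a b, forall z, phi z = a * z + b) ->
     (forall x y, x <= y -> phi x <= phi y) ->
     (exists B, forall z, Rabs (D 1%nat z) <= B) ->
     (forall z, D 1%nat z = D 1%nat (- z)) ->
     (exists B, forall z, Rabs (D 2%nat z) <= B) ->
     AllProps phi) /\
  AllProps sigmoid /\
  AllProps tanh /\
  (forall phi : R -> R,
     (forall z, has_integral (fun t => exp (- (t ^ 2))) 0 z (phi z)) ->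
     AllProps phi) /\
  ~ Property2 (fun z => z) /\
  ~ Property1 (fun z => z ^ 2) /\
  ~ Property2 (fun z => z ^ 2).
Proof.
  split. apply relu_all. split. apply leaky_all. split. apply sq_all.
  split. apply smooth_case. split. apply sigmoid_all. split. apply tanh_all.
  split. apply erf_all. split. apply not_P2_id. split. apply not_P1_sq. apply not_P2_sq.
Qed.
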